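(* Let $1\le p<\infty$, $\theta,\rho\in(0,1)$, $\Omega\in\mathbb{IR}^{d_0}$ a box with nonempty interior, and $\Phi:\mathbb R^{d_0}\to\mathbb R^{d_{L+1}}$ a feedforward neural network with twice differentiable activation $\sigma$ such that $\sigma,\sigma',\sigma''$ admit interval enclosures $\Sigma,\Sigma',\Sigma''$ that are Hölder continuous on $\mathbb{IR}$. Define $f_{\Phi,2,p}(x)=\sum_{i=1}^{d_{L+1}}\sum_{|\alpha|\le2}|D^\alpha\Phi_i(x)|^p$ and $$F_{\Phi,2,p}(K)=\sum_{i=1}^{d_{L+1}}\Big(|\mathrm{Fval}_{\Phi,L+1,\Sigma}(K)_i|^p+\sum_{j=1}^{d_0}|\mathrm{Jac}_{\Phi,0}(K)_{ij}|^p+\sum_{1\le j\le k\le d_0}|\mathrm{Hess}_{\Phi,i,0}(K)_{jk}|^p\Big).$$ Then $f_{\Phi,2,p}$ is continuous, $F_{\Phi,2,p}$ is a Hölder continuous interval enclosure of $f_{\Phi,2,p}$ on $\Omega$, and AdaQuad with integrand $f_{\Phi,2,p}$, enclosure $F_{\Phi,2,p}$, a positive-weight quadrature rule exact for constants, marking $\mathrm{D\ddot orfler}_\theta$ and refinement $\mathrm{H\ddot older}_\rho$ yields for all $n$ $$\big|\,\|\Phi\|_{W^{2,p}(\Omega;\mathbb R^{d_{L+1}})}-\mathrm Q_n^{1/p}\big|\le\eta_n^{1/p},\qquad\eta_{n+1}\le(1-\theta(1-\rho))\eta_n.$$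
   Context: $\|\Phi\|_{W^{k,p}(\Omega;\mathbb R^m)}=(\sum_{i=1}^m\sum_{|\alpha|\le k}\int_\Omega|D^\alpha\Phi_i|^pdx)^{1/p}$, sum over multi-indices each once. Intervals, boxes, interval arithmetic $X\circ Y=\{x\circ y\}$, interval matrix products via usual formula (left to right), $\odot$ entrywise; width $w$ (max entry width); $|X|=\{|x|:x\in X\}$, $X^\gamma=[\underline X^\gamma,\overline X^\gamma]$ for $\underline X\ge0$. Interval enclosure on $\Omega$: inclusion isotonic $F$ with $\phi(K)\subset F(K)$ for boxes $K\subset\Omega$; Hölder continuous: $w(F(K))\le Cw(K)^\gamma$. Network: weights $W^{(\ell)}$, biases $b^{(\ell)}$, $z^{(\ell)}=W^{(\ell-1)}x^{(\ell-1)}+b^{(\ell-1)}$, $x^{(\ell)}=\sigma(z^{(\ell)})$, $x^{(0)}=u$, $\Phi=z^{(L+1)}$. $\mathrm{Fval}_{\Phi,\ell,\Sigma}(K)$: $X^{(0)}=K$; for $k=0,\dots,\ell-1$: $Z^{(k+1)}=W^{(k)}X^{(k)}+b^{(k)}$, $X^{(k+1)}=\Sigma(Z^{(k+1)})$; return $Z^{(\ell)}$. $\mathrm{Jac}_{\Phi,\ell}(K)$: $J^{(L)}=W^{(L)}$; for $k=L-1,\dots,\ell$: $J^{(k)}=(J^{(k+1)}\mathrm{diag}(\Sigma'(\mathrm{Fval}_{\Phi,k+1,\Sigma}(K))))W^{(k)}$; return $J^{(\ell)}$. $\mathrm{Hess}_{\Phi,i,\ell}(K)$: $H^{(L)}=0$;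 for $k=L-1,\dots,\ell$, with $Z^{(k+1)}=\mathrm{Fval}_{\Phi,k+1,\Sigma}(K)$, $J_i^{(k+1)}$ the $i$-th row of $\mathrm{Jac}_{\Phi,k+1}(K)$: $H^{(k)}=W^{(k)T}\mathrm{diag}(\Sigma'(Z^{(k+1)}))H^{(k+1)}\mathrm{diag}(\Sigma'(Z^{(k+1)}))W^{(k)}+W^{(k)T}\mathrm{diag}(\Sigma''(Z^{(k+1)})\odot J_i^{(k+1)})W^{(k)}$; return $H^{(\ell)}$. AdaQuad: $\mathcal P_0=\{\Omega\}$; with $\eta_K=w(F(K))\mathrm{vol}(K)$, $\mathcal P_{n+1}=(\mathcal P_n\setminus\widetilde{\mathcal P}_n)\cup\bigcup_{K\in\widetilde{\mathcal P}_n}\mathcal R(K)$ with $\widetilde{\mathcal P}_n$ the marked set; $\mathrm Q_n=\sum_{K\in\mathcal P_n}\mathcal I(f,K)$, $\eta_n=\sum_{K\in\mathcal P_n}\eta_K$. Quadrature $\mathcal I(f,K)=\sum_iw_if(x_i)$, $x_i\in K$, $w_i>0$, $\sum w_i=\mathrm{vol}(K)$. $\mathrm{D\ddot orfler}_\theta$: repeatedly mark all unmarked elements of maximal indicator until the marked sum is $\ge\theta$ times the total. $\mathrm{H\ddot older}_\rho(K)$ with a Hölder constant $C$ and exponent $\gamma$ of $F$: if $\eta_K=0$ return $\{K\}$; else split each side $K_i$ (length $l_i$) uniformly into $m_i=\lceil l_i(C\mathrm{vol}(K)/(\rho\eta_K))^{1/\gamma}\rceil$ pieces and return all product boxes. 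*)

(* Defs.v *)
From Stdlib Require Import Reals Lra List.
From Coquelicot Require Import Coquelicot.
Import ListNotations.
Open Scope R_scope.

Fixpoint rsum (n : nat) (f : nat -> R) : R :=
  match n with O => 0 | S m => rsum m f + f m end.

Fixpoint rprod (n : nat) (f : nat -> R) : R :=
  match n with O => 1 | S m => rprod m f * f m end.

(* max_{j<n} f j (0 for n = 0; used only for nonnegative widths) *)
Fixpoint rmaxn (n : nat) (f : nat -> R) : R :=
  match n with O => 0 | S m => Rmax (rmaxn m f) (f m) end.

Definition lsum (l : list R) : R := fold_right Rplus 0 l.

(* x^y for x >= 0 and y > 0 (with 0^y = 0) *)
Definition rpow (x y : R) : R := if Rle_dec x 0 then 0 else Rpower x y.

(* ceiling of a real, as a natural number (negative values go to 0) *)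
Definition ceil_nat (x : R) : nat := Z.to_nat (1 - up (- x)).

(* ---------- points of R^n, coordinates indexed by nat (only j < n matter) ---------- *)

Definition upd {A : Type} (x : nat -> A) (j : nat) (t : A) : nat -> A :=
  fun m => if Nat.eqb m j then t else x m.

Definition pd (j : nat) (g : (nat -> R) -> R) (x : nat -> R) : R :=
  Derive (fun t => g (upd x j t)) (x j).

Definition cont_Rn (n : nat) (f : (nat -> R) -> R) : Prop :=
  forall x eps, 0 < eps -> exists delta, 0 < delta /\
    forall y, (forall j, (j < n)%nat -> Rabs (y j - x j) < delta) ->
      Rabs (f y - f x) < eps.

Record Itv := mkItv { lo : R; hi : R }.

Definition proper (X : Itv) : Prop := lo X <= hi X.
Definition inI (x : R) (X : Itv) : Prop := lo X <= x <= hi X.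
Definition subI (X Y : Itv) : Prop := lo Y <= lo X /\ hi X <= hi Y.
Definition width (X : Itv) : R := hi X - lo X.
Definition pt (x : R) : Itv := mkItv x x.

Definition iadd (X Y : Itv) : Itv := mkItv (lo X + lo Y) (hi X + hi Y).
Definition imul (X Y : Itv) : Itv :=
  let a := lo X * lo Y in let b := lo X * hi Y in
  let c := hi X * lo Y in let e := hi X * hi Y in
  mkItv (Rmin (Rmin a b) (Rmin c e)) (Rmax (Rmax a b) (Rmax c e)).
Definition iabs (X : Itv) : Itv :=
  mkItv (if Rle_dec 0 (lo X) then lo X else if Rle_dec (hi X) 0 then - hi X else 0)
        (Rmax (Rabs (lo X)) (Rabs (hi X))).
(* X^g = [lo^g, hi^g] (used for lo >= 0) *)
Definition ipow (X : Itv) (g : R) : Itv := mkItv (rpow (lo X) g) (rpow (hi X) g).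

Fixpoint isum (n : nat) (f : nat -> Itv) : Itv :=
  match n with O => pt 0 | S m => iadd (isum m f) (f m) end.

Definition imxmul (n : nat) (A B : nat -> nat -> Itv) : nat -> nat -> Itv :=
  fun i j => isum n (fun l => imul (A i l) (B l j)).
Definition imxadd (A B : nat -> nat -> Itv) : nat -> nat -> Itv :=
  fun i j => iadd (A i j) (B i j).
Definition idiag (v : nat -> Itv) : nat -> nat -> Itv :=
  fun i j => if Nat.eqb i j then v i else pt 0.
Definition ptm (M : nat -> nat -> R) : nat -> nat -> Itv := fun i j => pt (M i j).
Definition ptmT (M : nat -> nat -> R) : nat -> nat -> Itv := fun i j => pt (M j i).

Definition enclosure_IR (phi : R -> R) (Sg : Itv -> Itv) : Prop :=
  (forall X Y, proper X -> subI X Y -> subI (Sg X) (Sg Y)) /\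
  (forall X x, proper X -> inI x X -> inI (phi x) (Sg X)).

Definition holder_IR (Sg : Itv -> Itv) : Prop :=
  exists C g, 0 <= C /\ 0 < g /\
    forall X, proper X -> width (Sg X) <= C * rpow (width X) g.

Definition box := nat -> Itv.
Definition bproper (n : nat) (K : box) : Prop := forall j, (j < n)%nat -> proper (K j).
Definition binterior (n : nat) (K : box) : Prop := forall j, (j < n)%nat -> lo (K j) < hi (K j).
Definition bsub (n : nat) (K K' : box) : Prop := forall j, (j < n)%nat -> subI (K j) (K' j).
Definition inbox (n : nat) (x : nat -> R) (K : box) : Prop :=
  forall j, (j < n)%nat -> inI (x j) (K j).
Definition bvol (n : nat) (K : box) : R := rprod n (fun j => width (K j)).
Definition bwidth (n : nat) (K : box) : R := rmaxn n (fun j => width (K j)).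

Definition enclosure_box (n : nat) (Om : box) (phi : (nat -> R) -> R) (F : box -> Itv) : Prop :=
  (forall K K', bproper n K -> bsub n K K' -> bsub n K' Om -> subI (F K) (F K')) /\
  (forall K, bproper n K -> bsub n K Om -> forall x, inbox n x K -> inI (phi x) (F K)).

Definition holder_const (n : nat) (Om : box) (F : box -> Itv) (C g : R) : Prop :=
  0 <= C /\ 0 < g /\
  forall K, bproper n K -> bsub n K Om -> width (F K) <= C * rpow (bwidth n K) g.

Definition holder_box (n : nat) (Om : box) (F : box -> Itv) : Prop :=
  exists C g, holder_const n Om F C g.

Fixpoint iint (Om : box) (m : nat) (g : (nat -> R) -> R) (x : nat -> R) : R :=
  match m with
  | O => g x
  | S m' => RInt (fun t => iint Om m' g (upd x m' t)) (lo (Om m')) (hi (Om m'))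
  end.
Definition box_integral (n : nat) (Om : box) (g : (nat -> R) -> R) : R :=
  iint Om n g (fun _ => 0).

Record Net := mkNet {
  nL : nat;
  nd : nat -> nat;               (* widths d_0, ..., d_{L+1} *)
  nW : nat -> nat -> nat -> R;   (* nW l i j = W^(l)_{ij}, i < d_{l+1}, j < d_l *)
  nb : nat -> nat -> R
}.

Fixpoint xval (N : Net) (s : R -> R) (l : nat) (u : nat -> R) : nat -> R :=
  match l with
  | O => u
  | S k => fun i => s (rsum (nd N k) (fun j => nW N k i j * xval N s k u j) + nb N k i)
  end.

Definition Phi (N : Net) (s : R -> R) (i : nat) (u : nat -> R) : R :=
  rsum (nd N (nL N)) (fun j => nW N (nL N) i j * xval N s (nL N) u j) + nb N (nL N) i.

Definition izstep (N : Net) (k : nat) (X : nat -> Itv) : nat -> Itv :=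
  fun i => iadd (isum (nd N k) (fun j => imul (pt (nW N k i j)) (X j))) (pt (nb N k i)).

Fixpoint iX (N : Net) (Sg : Itv -> Itv) (k : nat) (K : box) : nat -> Itv :=
  match k with
  | O => K
  | S k' => fun i => Sg (izstep N k' (iX N Sg k' K) i)
  end.

Definition Fval (N : Net) (Sg : Itv -> Itv) (l : nat) (K : box) : nat -> Itv :=
  match l with
  | O => K
  | S k => izstep N k (iX N Sg k K)
  end.

(* jac_aux m = J^(L-m);  Jac_{Phi,l}(K) = jac_aux (L - l) *)
Fixpoint jac_aux (N : Net) (Sg Sg1 : Itv -> Itv) (K : box) (m : nat) : nat -> nat -> Itv :=
  match m with
  | O => ptm (nW N (nL N))
  | S m' =>
      let k := (nL N - S m')%nat in
      imxmul (nd N (k + 1))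
        (imxmul (nd N (k + 1)) (jac_aux N Sg Sg1 K m')
                (idiag (fun l => Sg1 (Fval N Sg (k + 1) K l))))
        (ptm (nW N k))
  end.
Definition Jac (N : Net) (Sg Sg1 : Itv -> Itv) (l : nat) (K : box) : nat -> nat -> Itv :=
  jac_aux N Sg Sg1 K (nL N - l).

(* hess_aux i m = H^(L-m);  Hess_{Phi,i,l}(K) = hess_aux i (L - l) *)
Fixpoint hess_aux (N : Net) (Sg Sg1 Sg2 : Itv -> Itv) (K : box) (i : nat) (m : nat)
  : nat -> nat -> Itv :=
  match m with
  | O => fun _ _ => pt 0
  | S m' =>
      let k := (nL N - S m')%nat in
      let n1 := nd N (k + 1) in
      let Z := Fval N Sg (k + 1) K in
      let D := idiag (fun l => Sg1 (Z l)) in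
      let Wt := ptmT (nW N k) in
      let Wk := ptm (nW N k) in
      let Ji := fun l => jac_aux N Sg Sg1 K m' i l in
      imxadd
        (imxmul n1 (imxmul n1 (imxmul n1 (imxmul n1 Wt D) (hess_aux N Sg Sg1 Sg2 K i m')) D) Wk)
        (imxmul n1 (imxmul n1 Wt (idiag (fun l => imul (Sg2 (Z l)) (Ji l)))) Wk)
  end.
Definition Hess (N : Net) (Sg Sg1 Sg2 : Itv -> Itv) (i l : nat) (K : box) : nat -> nat -> Itv :=
  hess_aux N Sg Sg1 Sg2 K i (nL N - l).

(* sum over i, and over multi-indices |alpha| <= 2: alpha = 0, e_j, e_j + e_k (j <= k) *)
Definition f_Phi (N : Net) (s : R -> R) (p : R) (x : nat -> R) : R :=
  let d0 := nd N 0 in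
  rsum (nd N (nL N + 1)) (fun i =>
    rpow (Rabs (Phi N s i x)) p
    + rsum d0 (fun j => rpow (Rabs (pd j (Phi N s i) x)) p)
    + rsum d0 (fun j => rsum (d0 - j) (fun t =>
         rpow (Rabs (pd (j + t) (pd j (Phi N s i)) x)) p))).

Definition F_Phi (N : Net) (Sg Sg1 Sg2 : Itv -> Itv) (p : R) (K : box) : Itv :=
  let d0 := nd N 0 in
  isum (nd N (nL N + 1)) (fun i =>
    iadd (iadd (ipow (iabs (Fval N Sg (nL N + 1) K i)) p)
               (isum d0 (fun j => ipow (iabs (Jac N Sg Sg1 0 K i j)) p)))
         (isum d0 (fun j => isum (d0 - j) (fun t =>
               ipow (iabs (Hess N Sg Sg1 Sg2 i 0 K j (j + t))) p)))).

Definition sobolev_norm (N : Net) (s : R -> R) (p : R) (Om : box) : R :=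
  let d0 := nd N 0 in
  let I := box_integral d0 Om in
  rpow (rsum (nd N (nL N + 1)) (fun i =>
      I (fun x => rpow (Rabs (Phi N s i x)) p)
    + rsum d0 (fun j => I (fun x => rpow (Rabs (pd j (Phi N s i) x)) p))
    + rsum d0 (fun j => rsum (d0 - j) (fun t =>
         I (fun x => rpow (Rabs (pd (j + t) (pd j (Phi N s i)) x)) p)))))
   (1 / p).

Definition quad_rule (n : nat) (Qr : box -> list (R * (nat -> R))) : Prop :=
  forall K, binterior n K ->
    (forall wx, In wx (Qr K) -> 0 < fst wx /\ inbox n (snd wx) K) /\
    lsum (map fst (Qr K)) = bvol n K.

Definition quad (Qr : box -> list (R * (nat -> R))) (f : (nat -> R) -> R) (K : box) : R :=
  lsum (map (fun wx => fst wx * f (snd wx)) (Qr K)).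

Definition etaK (n : nat) (F : box -> Itv) (K : box) : R := width (F K) * bvol n K.

Definition maxlist (l : list R) : R :=
  match l with [] => 0 | x :: l' => fold_left Rmax l' x end.

Fixpoint dorfler_aux (theta tot : R) (es : list R) (fuel : nat) (mask : list bool)
  : list bool :=
  match fuel with
  | O => mask
  | S f =>
      let msum := lsum (map fst (filter snd (combine es mask))) in
      if Rle_dec (theta * tot) msum then mask
      else
        let mx := maxlist (map fst (filter (fun eb : R * bool => negb (snd eb)) (combine es mask))) in
        dorfler_aux theta tot es f
          (map (fun eb : R * bool => if snd eb then true
                          else if Req_EM_T (fst eb) mx then true else false)
               (combine es mask))
  end.

Definition dorfler (theta : R) (es : list R) : list bool :=
  dorfler_aux theta (lsum es) es (S (length es)) (repeat false (length es)).

Definition piece (X : Itv) (m t : nat) : Itv :=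
  mkItv (lo X + INR t * width X / INR m) (lo X + INR (S t) * width X / INR m).

Fixpoint split_boxes (K : box) (m : nat -> nat) (c : nat) : list box :=
  match c with
  | O => [K]
  | S c' => flat_map (fun B => map (fun t => upd B c' (piece (K c') (m c') t))
                                   (seq 0 (m c')))
                     (split_boxes K m c')
  end.

Definition holder_refine (n : nat) (F : box -> Itv) (C g rho : R) (K : box) : list box :=
  let e := etaK n F K in
  if Req_EM_T e 0 then [K]
  else split_boxes K
         (fun j => ceil_nat (width (K j) * rpow (C * bvol n K / (rho * e)) (1 / g))) n.

Definition adaquad_step (n : nat) (F : box -> Itv) (theta C g rho : R) (P : list box)
  : list box :=
  let mask := dorfler theta (map (etaK n F) P) in
  let PM := combine P mask in
  map fst (filter (fun Kb : box * bool => negb (snd Kb)) PM)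
  ++ flat_map (fun Kb : box * bool => holder_refine n F C g rho (fst Kb)) (filter snd PM).

Fixpoint adaquad_partition (n : nat) (Om : box) (F : box -> Itv) (theta C g rho : R)
  (k : nat) : list box :=
  match k with
  | O => [Om]
  | S k' => adaquad_step n F theta C g rho (adaquad_partition n Om F theta C g rho k')
  end.

Definition adaquad_Q (n : nat) (Om : box) (F : box -> Itv) (theta C g rho : R)
  (Qr : box -> list (R * (nat -> R))) (f : (nat -> R) -> R) (k : nat) : R :=
  lsum (map (quad Qr f) (adaquad_partition n Om F theta C g rho k)).

Definition adaquad_eta (n : nat) (Om : box) (F : box -> Itv) (theta C g rho : R)
  (k : nat) : R :=
  lsum (map (etaK n F) (adaquad_partition n Om F theta C g rho k)).

(* Main.v *)
Require Import Defs.
From Stdlib Require Import Reals Lra Lia List FunctionalExtensionality ZArith.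
From Coquelicot Require Import Coquelicot.
Import ListNotations.
Open Scope R_scope.

Lemma rsum_ext n f g : (forall j, (j < n)%nat -> f j = g j) -> rsum n f = rsum n g.
Proof. induction n; simpl; intros H; auto. rewrite IHn by (intros; apply H; lia). rewrite H by lia; auto. Qed.

Lemma rsum_plus n f g : rsum n (fun j => f j + g j) = rsum n f + rsum n g.
Proof. induction n; simpl; [lra|]. rewrite IHn; lra. Qed.

Lemma rsum_scal_l n c f : rsum n (fun j => c * f j) = c * rsum n f.
Proof. induction n; simpl; [lra|]. rewrite IHn; lra. Qed.

Lemma rsum_scal_r n c f : rsum n (fun j => f j * c) = rsum n f * c.
Proof. induction n; simpl; [lra|]. rewrite IHn; lra. Qed.

Lemma rsum_zero n : rsum n (fun _ => 0) = 0.
Proof. induction n; simpl; [lra|]. rewrite IHn; lra. Qed.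

Lemma rsum_swap n m f : rsum n (fun i => rsum m (fun j => f i j)) = rsum m (fun j => rsum n (fun i => f i j)).
Proof.
  induction n; simpl. rewrite rsum_zero; auto.
  rewrite IHn. rewrite <- rsum_plus. auto.
Qed.

Lemma rsum_le n f g : (forall j, (j < n)%nat -> f j <= g j) -> rsum n f <= rsum n g.
Proof. induction n; simpl; intros H; [lra|]. assert (f n <= g n) by (apply H; lia). assert (rsum n f <= rsum n g) by (apply IHn; intros; apply H; lia). lra. Qed.

Lemma rsum_nonneg n f : (forall j, (j < n)%nat -> 0 <= f j) -> 0 <= rsum n f.
Proof. intros H. rewrite <- (rsum_zero n). apply rsum_le; auto. Qed.

Lemma rsum_delta n b f : (b < n)%nat -> rsum n (fun c => if Nat.eqb c b then f c else 0) = f b.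
Proof.
  induction n; intros Hb; [lia|]. simpl. destruct (Nat.eqb_spec n b).
  - subst. rewrite (rsum_ext _ _ (fun _ => 0)). rewrite rsum_zero; lra.
    intros j Hj. destruct (Nat.eqb_spec j b); auto; lia.
  - rewrite IHn by lia. lra.
Qed.

Lemma rsum_delta' n b f : (b < n)%nat -> rsum n (fun c => if Nat.eqb b c then f c else 0) = f b.
Proof. intros Hb. rewrite <- (rsum_delta n b f Hb). apply rsum_ext. intros j _.
  rewrite Nat.eqb_sym; auto. Qed.

Lemma rsum_abs n f : Rabs (rsum n f) <= rsum n (fun j => Rabs (f j)).
Proof. induction n; simpl. rewrite Rabs_R0; lra.
  eapply Rle_trans. apply Rabs_triang. lra. Qed.

Lemma lsum_app l1 l2 : lsum (l1 ++ l2) = lsum l1 + lsum l2.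
Proof. induction l1; simpl; [lra|]. unfold lsum in *; simpl. rewrite IHl1; lra. Qed.

Lemma lsum_cons a l : lsum (a :: l) = a + lsum l.
Proof. reflexivity. Qed.

Lemma lsum_map_plus {A} (f g : A -> R) l : lsum (map (fun x => f x + g x) l) = lsum (map f l) + lsum (map g l).
Proof. induction l; simpl; unfold lsum in *; simpl; [lra|]. rewrite IHl; lra. Qed.

Lemma lsum_map_le {A} (f g : A -> R) l : (forall x, In x l -> f x <= g x) -> lsum (map f l) <= lsum (map g l).
Proof. induction l; simpl; unfold lsum in *; simpl; intros H; [lra|].
  assert (f a <= g a) by auto. assert (fold_right Rplus 0 (map f l) <= fold_right Rplus 0 (map g l)) by auto. lra. Qed.

Lemma lsum_map_ext {A} (f g : A -> R) l : (forall x, In x l -> f x = g x) -> lsum (map f l) = lsum (map g l).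
Proof. induction l; simpl; unfold lsum in *; simpl; intros H; auto.
  rewrite H by auto. rewrite IHl; auto. Qed.

Lemma lsum_map_scal {A} c (f : A -> R) l : lsum (map (fun x => c * f x) l) = c * lsum (map f l).
Proof. induction l; simpl; unfold lsum in *; simpl; [lra|]. rewrite IHl; lra. Qed.

Lemma lsum_flat_map {A B} (g : A -> list B) (f : B -> R) l :
  lsum (map f (flat_map g l)) = lsum (map (fun x => lsum (map f (g x))) l).
Proof. induction l; simpl; auto. rewrite map_app, lsum_app, IHl. reflexivity. Qed.

Lemma lsum_nonneg l : (forall x, In x l -> 0 <= x) -> 0 <= lsum l.
Proof. induction l; simpl; unfold lsum; simpl; intros H; [lra|].
  assert (0 <= a) by auto. assert (0 <= fold_right Rplus 0 l) by (apply IHl; auto). lra. Qed.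

Lemma lsum_seq_rsum m f : lsum (map f (seq 0 m)) = rsum m f.
Proof. induction m; auto. rewrite seq_S, map_app, lsum_app, IHm. simpl. unfold lsum; simpl. lra. Qed.

Lemma rpow_pos x g : 0 < x -> rpow x g = Rpower x g.
Proof. intros. unfold rpow. destruct (Rle_dec x 0); auto; lra. Qed.
Lemma rpow_nonpos x g : x <= 0 -> rpow x g = 0.
Proof. intros. unfold rpow. destruct (Rle_dec x 0); auto; lra. Qed.

Lemma Rpower_pos x g : 0 < Rpower x g.
Proof. unfold Rpower. apply exp_pos. Qed.

Lemma rpow_ge0 x g : 0 <= rpow x g.
Proof. unfold rpow. destruct (Rle_dec x 0); [lra|]. left; apply Rpower_pos. Qed.

Lemma rpow_gt0 x g : 0 < x -> 0 < rpow x g.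
Proof. intros. rewrite rpow_pos by auto. apply Rpower_pos. Qed.

Lemma rpow_le x y g : 0 <= g -> x <= y -> rpow x g <= rpow y g.
Proof.
  intros Hg Hxy. destruct (Rle_dec x 0). rewrite rpow_nonpos by auto. apply rpow_ge0.
  rewrite !rpow_pos by lra. apply Rle_Rpower_l; lra.
Qed.

Lemma rpow_mult a b g : 0 <= a -> 0 <= b -> rpow (a * b) g = rpow a g * rpow b g.
Proof.
  intros Ha Hb. destruct (Req_dec a 0). subst. rewrite Rmult_0_l, !(rpow_nonpos 0) by lra. lra.
  destruct (Req_dec b 0). subst. rewrite Rmult_0_r, !(rpow_nonpos 0) by lra. lra.
  rewrite !rpow_pos by nra. rewrite Rpower_mult_distr; auto; lra.
Qed.

Lemma rpow_rpow x a b : 0 <= x -> rpow (rpow x a) b = rpow x (a * b).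
Proof.
  intros Hx. destruct (Req_dec x 0). subst. rewrite !(rpow_nonpos 0) by lra; reflexivity.
  rewrite (rpow_pos x) by lra. rewrite rpow_pos by apply Rpower_pos. rewrite rpow_pos by lra.
  apply Rpower_mult.
Qed.

Lemma rpow_1 x : 0 <= x -> rpow x 1 = x.
Proof. intros. destruct (Req_dec x 0). subst; apply rpow_nonpos; lra. rewrite rpow_pos by lra. apply Rpower_1; lra. Qed.

Lemma rpow_plus_exp x a b : 0 < x -> rpow x (a + b) = rpow x a * rpow x b.
Proof. intros. rewrite !rpow_pos by auto. apply Rpower_plus. Qed.

Lemma rpow_0 x : 0 < x -> rpow x 0 = 1.
Proof. intros. rewrite rpow_pos by auto. apply Rpower_O; auto. Qed.

Lemma rpow_exp_split w W g g1 : 0 <= w <= W -> 0 < W -> 0 < g <= g1 ->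
  rpow w g1 <= rpow W (g1 - g) * rpow w g.
Proof.
  intros Hw HW Hg. destruct (Req_dec w 0). subst. rewrite !(rpow_nonpos 0) by lra. lra.
  replace g1 with ((g1 - g) + g) at 1 by lra. rewrite rpow_plus_exp by lra.
  apply Rmult_le_compat_r. apply rpow_ge0. apply rpow_le; lra.
Qed.

Lemma rpow_inv x g : 0 < x -> rpow (/ x) g = / rpow x g.
Proof. intros. rewrite !rpow_pos by (auto; apply Rinv_0_lt_compat; auto).
  unfold Rpower. rewrite ln_Rinv by auto. rewrite <- exp_Ropp. f_equal; ring. Qed.



Lemma exp_le_mono a b : a <= b -> exp a <= exp b.
Proof. intros [H|H]. left; apply exp_increasing; auto. subst; lra. Qed.

Lemma Rpower_le_exp_small x a b : 0 < x <= 1 -> a <= b -> Rpower x b <= Rpower x a.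
Proof.
  intros Hx Hab. unfold Rpower. apply exp_le_mono.
  assert (ln x <= 0). { rewrite <- ln_1. destruct (Req_dec x 1). subst; lra. left; apply ln_increasing; lra. }
  nra.
Qed.

Lemma rpow_subadd x y q : 0 <= x -> 0 <= y -> 0 < q <= 1 -> rpow (x + y) q <= rpow x q + rpow y q.
Proof.
  intros Hx Hy Hq. destruct (Req_dec x 0). subst. rewrite Rplus_0_l. pose proof (rpow_ge0 0 q). lra.
  destruct (Req_dec y 0). subst. rewrite Rplus_0_r. pose proof (rpow_ge0 0 q). lra.
  rewrite !rpow_pos by lra.
  assert (E : forall z, 0 < z -> Rpower z q = z * Rpower z (q - 1)).
  { intros z Hz. replace q with (1 + (q - 1)) at 1 by lra. rewrite Rpower_plus, Rpower_1; auto. }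
  rewrite (E (x+y)), (E x), (E y) by lra.
  assert (Rpower (x + y) (q - 1) <= Rpower x (q - 1)).
  { unfold Rpower. apply exp_le_mono. assert (ln x <= ln (x+y)). { left; apply ln_increasing; lra. } nra. }
  assert (Rpower (x + y) (q - 1) <= Rpower y (q - 1)).
  { unfold Rpower. apply exp_le_mono. assert (ln y <= ln (x+y)). { left; apply ln_increasing; lra. } nra. }
  nra.
Qed.

Lemma rpow_lip p x y M : 1 <= p -> 0 <= y <= x -> x <= M ->
  rpow x p - rpow y p <= p * rpow M (p - 1) * (x - y).
Proof.
  intros Hp Hyx HxM. destruct (Req_dec x y). subst. assert (0 <= p * rpow M (p-1)) by (pose proof (rpow_ge0 M (p-1)); nra). nra.
  assert (HM : 0 < M) by lra.
  assert (Hc : forall c, 0 < c <= M -> Rpower c (p - 1) <= rpow M (p - 1)).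
  { intros c Hc. rewrite rpow_pos by lra. apply Rle_Rpower_l; lra. }
  destruct (Req_dec y 0).
  - subst. rewrite (rpow_nonpos 0) by lra. rewrite rpow_pos by lra.
    replace (Rpower x p) with (x * Rpower x (p - 1)).
    2:{ replace p with (1 + (p - 1)) at 2 by lra. rewrite Rpower_plus, Rpower_1; lra. }
    pose proof (Hc x ltac:(lra)). pose proof (Rpower_pos x (p-1)).
    assert (x * Rpower x (p-1) <= x * rpow M (p-1)) by (apply Rmult_le_compat_l; lra).
    pose proof (rpow_ge0 M (p-1)). assert (0 <= (p-1) * rpow M (p-1) * x) by (apply Rmult_le_pos; [apply Rmult_le_pos|]; lra). nra.
  - rewrite (rpow_pos x), (rpow_pos y) by lra.
    destruct (MVT_cor2 (fun z => Rpower z p) (fun z => p * Rpower z (p - 1)) y x) as [c [Hc1 Hc2]].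
    lra. intros c Hc'. apply derivable_pt_lim_power. lra.
    rewrite Hc1. pose proof (Hc c ltac:(lra)). pose proof (Rpower_pos c (p-1)). pose proof (rpow_ge0 M (p-1)).
    apply Rmult_le_compat_r; [lra| apply Rmult_le_compat_l; lra].
Qed.

Lemma rpow_le_self x p : 1 <= p -> 0 <= x <= 1 -> rpow x p <= x.
Proof.
  intros Hp Hx. destruct (Req_dec x 0). subst. rewrite rpow_nonpos; lra.
  rewrite rpow_pos by lra. rewrite <- (Rpower_1 x) at 2 by lra. apply Rpower_le_exp_small; lra.
Qed.

Lemma inI_pt x : inI x (pt x).
Proof. unfold inI, pt; simpl; lra. Qed.

Lemma inI_add a b X Y : inI a X -> inI b Y -> inI (a + b) (iadd X Y).
Proof. unfold inI, iadd; simpl; lra. Qed.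

Lemma lin_bounds l h a b : l <= a <= h -> Rmin (l * b) (h * b) <= a * b <= Rmax (l * b) (h * b).
Proof.
  intros H. destruct (Rle_dec 0 b).
  - split. eapply Rle_trans. apply Rmin_l. nra. eapply Rle_trans. 2: apply Rmax_r. nra.
  - split. eapply Rle_trans. apply Rmin_r. nra. eapply Rle_trans. 2: apply Rmax_l. nra.
Qed.

Lemma inI_mul a b X Y : inI a X -> inI b Y -> inI (a * b) (imul X Y).
Proof.
  unfold inI, imul; simpl. intros HX HY.
  destruct (lin_bounds _ _ a b HX) as [H1 H2].
  assert (Hl : forall u, lo X <= u <= hi X -> Rmin (Rmin (lo X * lo Y) (lo X * hi Y)) (Rmin (hi X * lo Y) (hi X * hi Y)) <= u * b <= Rmax (Rmax (lo X * lo Y) (lo X * hi Y)) (Rmax (hi X * lo Y) (hi X * hi Y))).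
  { intros u Hu. destruct (lin_bounds _ _ b u HY) as [G1 G2].
    rewrite (Rmult_comm u b). replace (lo Y * u) with (u * lo Y) in * by ring. replace (hi Y * u) with (u * hi Y) in * by ring.
    destruct (lin_bounds _ _ u (lo Y) Hu). destruct (lin_bounds _ _ u (hi Y) Hu).
    split.
    - apply Rle_trans with (Rmin (u * lo Y) (u * hi Y)); auto.
      apply Rmin_glb.
      + apply Rle_trans with (Rmin (lo X * lo Y) (hi X * lo Y)); auto.
        apply Rmin_glb. eapply Rle_trans; [apply Rmin_l|apply Rmin_l]. eapply Rle_trans; [apply Rmin_r|apply Rmin_l].
      + apply Rle_trans with (Rmin (lo X * hi Y) (hi X * hi Y)); auto.
        apply Rmin_glb. eapply Rle_trans; [apply Rmin_l|apply Rmin_r]. eapply Rle_trans; [apply Rmin_r|apply Rmin_r].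
    - apply Rle_trans with (Rmax (u * lo Y) (u * hi Y)); auto.
      apply Rmax_lub.
      + apply Rle_trans with (Rmax (lo X * lo Y) (hi X * lo Y)); auto.
        apply Rmax_lub. eapply Rle_trans; [|apply Rmax_l]; apply Rmax_l. eapply Rle_trans; [|apply Rmax_r]; apply Rmax_l.
      + apply Rle_trans with (Rmax (lo X * hi Y) (hi X * hi Y)); auto.
        apply Rmax_lub. eapply Rle_trans; [|apply Rmax_l]; apply Rmax_r. eapply Rle_trans; [|apply Rmax_r]; apply Rmax_r. }
  apply Hl; auto.
Qed.

Lemma inI_abs a X : inI a X -> inI (Rabs a) (iabs X).
Proof.
  unfold inI, iabs; simpl. intros H.
  split.
  - destruct (Rle_dec 0 (lo X)). rewrite Rabs_right; lra.
    destruct (Rle_dec (hi X) 0). rewrite Rabs_left1; lra. apply Rabs_pos.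
  - unfold Rabs, Rmax. repeat destruct Rcase_abs; repeat destruct Rle_dec; lra.
Qed.

Lemma inI_pow a X g : 0 <= g -> inI a X -> inI (rpow a g) (ipow X g).
Proof. unfold inI, ipow; simpl. intros Hg H. split; apply rpow_le; lra. Qed.

Lemma inI_sum n f F : (forall j, (j < n)%nat -> inI (f j) (F j)) -> inI (rsum n f) (isum n F).
Proof. induction n; simpl; intros H. apply inI_pt. apply inI_add. apply IHn; intros; apply H; lia. apply H; lia. Qed.

Lemma inI_proper x X : inI x X -> proper X.
Proof. unfold inI, proper; lra. Qed.

Lemma proper_pt x : proper (pt x).
Proof. unfold proper, pt; simpl; lra. Qed.
Lemma proper_add X Y : proper X -> proper Y -> proper (iadd X Y).
Proof. unfold proper, iadd; simpl; lra. Qed.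
Lemma proper_mul X Y : proper (imul X Y).
Proof. unfold proper, imul; simpl. eapply Rle_trans. apply Rmin_l. eapply Rle_trans. apply Rmin_l.
  eapply Rle_trans. 2: apply Rmax_l. apply Rmax_l. Qed.
Lemma proper_abs X : proper X -> proper (iabs X).
Proof. intros H. apply (inI_proper (Rabs (lo X))). apply inI_abs. unfold inI, proper in *; lra. Qed.
Lemma proper_pow X g : 0 <= g -> proper X -> proper (ipow X g).
Proof. intros Hg H. unfold proper, ipow; simpl. apply rpow_le; auto. Qed.
Lemma proper_sum n F : (forall j, (j < n)%nat -> proper (F j)) -> proper (isum n F).
Proof. induction n; simpl; intros H. apply proper_pt. apply proper_add. apply IHn; intros; apply H; lia. apply H; lia. Qed.

Lemma subI_refl X : subI X X.
Proof. unfold subI; lra. Qed.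
Lemma subI_add X Y X' Y' : subI X X' -> subI Y Y' -> subI (iadd X Y) (iadd X' Y').
Proof. unfold subI, iadd; simpl; lra. Qed.

Lemma imul_lo_attained X Y : proper X -> proper Y ->
  exists a b, inI a X /\ inI b Y /\ lo (imul X Y) = a * b.
Proof.
  unfold proper; intros HX HY. unfold imul; simpl.
  assert (A1: inI (lo X) X) by (unfold inI; lra). assert (A2: inI (hi X) X) by (unfold inI; lra).
  assert (B1: inI (lo Y) Y) by (unfold inI; lra). assert (B2: inI (hi Y) Y) by (unfold inI; lra).
  apply Rmin_case; apply Rmin_case; eauto 10.
Qed.
Lemma imul_hi_attained X Y : proper X -> proper Y ->
  exists a b, inI a X /\ inI b Y /\ hi (imul X Y) = a * b.
Proof.
  unfold proper; intros HX HY. unfold imul; simpl.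
  assert (A1: inI (lo X) X) by (unfold inI; lra). assert (A2: inI (hi X) X) by (unfold inI; lra).
  assert (B1: inI (lo Y) Y) by (unfold inI; lra). assert (B2: inI (hi Y) Y) by (unfold inI; lra).
  apply Rmax_case; apply Rmax_case; eauto 10.
Qed.

Lemma inI_sub x X Y : inI x X -> subI X Y -> inI x Y.
Proof. unfold inI, subI; lra. Qed.

Lemma subI_mul X Y X' Y' : proper X -> proper Y -> subI X X' -> subI Y Y' -> subI (imul X Y) (imul X' Y').
Proof.
  intros HX HY S1 S2. split.
  - destruct (imul_lo_attained X Y HX HY) as [a [b [Ha [Hb E]]]]. rewrite E.
    apply (inI_mul a b X' Y'); eapply inI_sub; eauto.
  - destruct (imul_hi_attained X Y HX HY) as [a [b [Ha [Hb E]]]]. rewrite E.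
    apply (inI_mul a b X' Y'); eapply inI_sub; eauto.
Qed.

Lemma subI_abs X X' : proper X -> subI X X' -> subI (iabs X) (iabs X').
Proof.
  intros HX S. unfold proper, subI in *. unfold iabs; simpl.
  split.
  - destruct (Rle_dec 0 (lo X')); destruct (Rle_dec 0 (lo X)); try lra;
    destruct (Rle_dec (hi X') 0); destruct (Rle_dec (hi X) 0); lra.
  - unfold Rabs, Rmax. repeat destruct Rcase_abs; repeat destruct Rle_dec; lra.
Qed.

Lemma subI_pow X X' g : 0 <= g -> 0 <= lo X' -> subI X X' -> subI (ipow X g) (ipow X' g).
Proof. unfold subI, ipow; simpl; intros. split; apply rpow_le; lra. Qed.

Lemma subI_sum n F F' : (forall j, (j < n)%nat -> subI (F j) (F' j)) -> subI (isum n F) (isum n F').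
Proof. induction n; simpl; intros H. apply subI_refl. apply subI_add. apply IHn; intros; apply H; lia. apply H; lia. Qed.

Lemma width_add X Y : width (iadd X Y) = width X + width Y.
Proof. unfold width, iadd; simpl; ring. Qed.
Lemma width_pt x : width (pt x) = 0.
Proof. unfold width, pt; simpl; ring. Qed.
Lemma width_sum n F : width (isum n F) = rsum n (fun j => width (F j)).
Proof. induction n; simpl. apply width_pt. rewrite width_add, IHn; auto. Qed.

Lemma inI_bound x X : inI x X -> Rabs x <= Rmax (Rabs (lo X)) (Rabs (hi X)).
Proof. unfold inI; intros H. unfold Rabs, Rmax. repeat destruct Rcase_abs; repeat destruct Rle_dec; lra. Qed.

Lemma prod_diff a b a' b' MX MY wX wY : Rabs a <= MX -> Rabs b' <= MY ->
  Rabs (b - b') <= wY -> Rabs (a - a') <= wX -> a * b - a' * b' <= MX * wY + MY * wX.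
Proof.
  intros H1 H2 H3 H4. replace (a * b - a' * b') with (a * (b - b') + b' * (a - a')) by ring.
  assert (a * (b - b') <= MX * wY).
  { eapply Rle_trans. apply Rle_abs. rewrite Rabs_mult. apply Rmult_le_compat; auto using Rabs_pos. }
  assert (b' * (a - a') <= MY * wX).
  { eapply Rle_trans. apply Rle_abs. rewrite Rabs_mult. apply Rmult_le_compat; auto using Rabs_pos. }
  lra.
Qed.

Lemma width_mul X Y MX MY : proper X -> proper Y ->
  (forall x, inI x X -> Rabs x <= MX) -> (forall y, inI y Y -> Rabs y <= MY) ->
  width (imul X Y) <= MX * width Y + MY * width X.
Proof.
  intros HX HY BX BY. unfold width.
  destruct (imul_lo_attained X Y HX HY) as [a' [b' [Ha' [Hb' E1]]]].
  destruct (imul_hi_attained X Y HX HY) as [a [b [Ha [Hb E2]]]].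
  rewrite E1, E2. apply prod_diff; auto.
  unfold inI in *; unfold Rabs; destruct Rcase_abs; lra.
  unfold inI in *; unfold Rabs; destruct Rcase_abs; lra.
Qed.

Lemma width_abs X : proper X -> width (iabs X) <= width X.
Proof.
  unfold proper, width, iabs; simpl. intros H.
  destruct (Rle_dec 0 (lo X)); [|destruct (Rle_dec (hi X) 0)];
  unfold Rabs, Rmax; repeat destruct Rcase_abs; repeat destruct Rle_dec; lra.
Qed.

Lemma width_pow X p M : 1 <= p -> 0 <= lo X -> proper X -> hi X <= M ->
  width (ipow X p) <= p * rpow M (p - 1) * width X.
Proof. unfold proper, width, ipow; simpl; intros. apply rpow_lip; lra. Qed.

Lemma width_nonneg X : proper X -> 0 <= width X.
Proof. unfold proper, width; lra. Qed.

Lemma rmaxn_ge n f j : (j < n)%nat -> f j <= rmaxn n f.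
Proof. induction n; intros H; [lia|]. simpl. destruct (Nat.eq_dec j n). subst; apply Rmax_r.
  eapply Rle_trans. apply IHn; lia. apply Rmax_l. Qed.
Lemma rmaxn_ge0 n f : 0 <= rmaxn n f.
Proof. induction n; simpl. lra. eapply Rle_trans. apply IHn. apply Rmax_l. Qed.
Lemma rmaxn_le n f B : 0 <= B -> (forall j, (j < n)%nat -> f j <= B) -> rmaxn n f <= B.
Proof. induction n; simpl; intros HB H. auto. apply Rmax_lub. apply IHn; auto. apply H; lia. Qed.
Lemma rmaxn_mono n f g : (forall j, (j < n)%nat -> f j <= g j) -> rmaxn n f <= rmaxn n g.
Proof. intros H. apply rmaxn_le. apply rmaxn_ge0. intros j Hj. eapply Rle_trans. apply H; auto. apply rmaxn_ge; auto. Qed.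

Lemma bwidth_ge0 n K : 0 <= bwidth n K.
Proof. apply rmaxn_ge0. Qed.
Lemma bwidth_sub n K K' : bproper n K -> bsub n K K' -> bwidth n K <= bwidth n K'.
Proof. intros HK S. apply rmaxn_mono. intros j Hj. destruct (S j Hj). unfold width; lra. Qed.
Lemma width_le_bwidth n K j : (j < n)%nat -> width (K j) <= bwidth n K.
Proof. intros; unfold bwidth; apply (rmaxn_ge n (fun j => width (K j))); auto. Qed.

Lemma bsub_refl n K : bsub n K K.
Proof. intros j _. apply subI_refl. Qed.
Lemma bsub_trans n K1 K2 K3 : bsub n K1 K2 -> bsub n K2 K3 -> bsub n K1 K3.
Proof. unfold bsub, subI; intros A B j Hj. specialize (A j Hj); specialize (B j Hj); lra. Qed.

Definition Good (n : nat) (Om : box) (Q : box -> Itv) : Prop :=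
  (forall K, bproper n K -> bsub n K Om -> proper (Q K)) /\
  (forall K K', bproper n K -> bsub n K K' -> bsub n K' Om -> subI (Q K) (Q K')) /\
  (exists C g, 0 < C /\ 0 < g /\ forall K, bproper n K -> bsub n K Om ->
      width (Q K) <= C * rpow (bwidth n K) g).

Definition GoodBound (Q : box -> Itv) (Om : box) : R := Rmax (Rabs (lo (Q Om))) (Rabs (hi (Q Om))).

Lemma Good_bound n Om Q : bproper n Om -> Good n Om Q ->
  forall K, bproper n K -> bsub n K Om -> forall x, inI x (Q K) -> Rabs x <= GoodBound Q Om.
Proof.
  intros HOm [_ [Hiso _]] K HK HKO x Hx. apply inI_bound. eapply inI_sub; eauto.
  apply Hiso; auto. apply bsub_refl.
Qed.

Lemma holder_weaken C g1 g b W : 0 <= b <= W -> 0 < W -> 0 < g <= g1 -> 0 <= C ->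
  C * rpow b g1 <= (C * rpow W (g1 - g)) * rpow b g.
Proof. intros. rewrite Rmult_assoc. apply Rmult_le_compat_l; auto. apply rpow_exp_split; lra. Qed.

Lemma Good_pt n Om c : Good n Om (fun _ => pt c).
Proof.
  split; [intros; apply proper_pt|split]. intros; apply subI_refl.
  exists 1, 1. split; [lra|split;[lra|]]. intros. rewrite width_pt.
  pose proof (rpow_ge0 (bwidth n K) 1). lra.
Qed.

Lemma Good_coord n Om j : (j < n)%nat -> Good n Om (fun K => K j).
Proof.
  intros Hj. split; [intros K HK _; apply HK; auto|split].
  intros K K' _ S _; apply S; auto.
  exists 1, 1. split; [lra|split;[lra|]]. intros K HK _. rewrite rpow_1 by apply bwidth_ge0.
  rewrite Rmult_1_l. apply width_le_bwidth; auto.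
Qed.

Lemma Good_add n Om Q1 Q2 : 0 < bwidth n Om -> Good n Om Q1 -> Good n Om Q2 ->
  Good n Om (fun K => iadd (Q1 K) (Q2 K)).
Proof.
  intros HW [P1 [I1 [C1 [g1 [HC1 [Hg1 H1]]]]]] [P2 [I2 [C2 [g2 [HC2 [Hg2 H2]]]]]].
  split; [intros; apply proper_add; auto|split]. intros; apply subI_add; auto.
  set (g := Rmin g1 g2). set (W := bwidth n Om).
  exists (C1 * rpow W (g1 - g) + C2 * rpow W (g2 - g)), g.
  assert (Hg : 0 < g) by (unfold g; apply Rmin_case; lra).
  split. pose proof (rpow_gt0 W (g1 - g) HW). pose proof (rpow_gt0 W (g2 - g) HW). nra.
  split; auto. intros K HK HKO. rewrite width_add.
  assert (Hb : 0 <= bwidth n K <= W) by (split; [apply bwidth_ge0| apply bwidth_sub; auto]).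
  pose proof (H1 K HK HKO). pose proof (H2 K HK HKO).
  pose proof (holder_weaken C1 g1 g (bwidth n K) W Hb HW ltac:(split; [auto| apply Rmin_l]) ltac:(lra)).
  pose proof (holder_weaken C2 g2 g (bwidth n K) W Hb HW ltac:(split; [auto| apply Rmin_r]) ltac:(lra)).
  lra.
Qed.

Lemma Good_mul n Om Q1 Q2 : bproper n Om -> 0 < bwidth n Om -> Good n Om Q1 -> Good n Om Q2 ->
  Good n Om (fun K => imul (Q1 K) (Q2 K)).
Proof.
  intros HOm HW G1 G2.
  pose proof (Good_bound _ _ _ HOm G1) as B1. pose proof (Good_bound _ _ _ HOm G2) as B2.
  destruct G1 as [P1 [I1 [C1 [g1 [HC1 [Hg1 H1]]]]]]. destruct G2 as [P2 [I2 [C2 [g2 [HC2 [Hg2 H2]]]]]].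
  split; [intros; apply proper_mul|split].
  intros K K' HK S HK'. apply subI_mul; auto. apply P1; auto. eapply bsub_trans; eauto.
  apply P2; auto. eapply bsub_trans; eauto.
  set (M1 := GoodBound Q1 Om). set (M2 := GoodBound Q2 Om).
  assert (HM1 : 0 <= M1) by (unfold M1, GoodBound; eapply Rle_trans; [apply Rabs_pos|apply Rmax_l]).
  assert (HM2 : 0 <= M2) by (unfold M2, GoodBound; eapply Rle_trans; [apply Rabs_pos|apply Rmax_l]).
  set (g := Rmin g1 g2). set (W := bwidth n Om).
  exists (M1 * (C2 * rpow W (g2 - g)) + M2 * (C1 * rpow W (g1 - g)) + 1), g.
  assert (Hg : 0 < g) by (unfold g; apply Rmin_case; lra).
  split. pose proof (rpow_gt0 W (g1 - g) HW). pose proof (rpow_gt0 W (g2 - g) HW).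
  assert (0 <= M1 * (C2 * rpow W (g2 - g))) by (apply Rmult_le_pos; nra).
  assert (0 <= M2 * (C1 * rpow W (g1 - g))) by (apply Rmult_le_pos; nra). lra.
  split; auto. intros K HK HKO.
  eapply Rle_trans. apply width_mul; auto. intros x Hx; apply (B1 K); auto. intros x Hx; apply (B2 K); auto.
  assert (Hb : 0 <= bwidth n K <= W) by (split; [apply bwidth_ge0| apply bwidth_sub; auto]).
  pose proof (H1 K HK HKO). pose proof (H2 K HK HKO).
  pose proof (holder_weaken C1 g1 g (bwidth n K) W Hb HW ltac:(split; [auto| apply Rmin_l]) ltac:(lra)).
  pose proof (holder_weaken C2 g2 g (bwidth n K) W Hb HW ltac:(split; [auto| apply Rmin_r]) ltac:(lra)).
  pose proof (rpow_ge0 (bwidth n K) g).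
  assert (M1 * width (Q2 K) <= M1 * (C2 * rpow W (g2 - g) * rpow (bwidth n K) g)) by (apply Rmult_le_compat_l; lra).
  assert (M2 * width (Q1 K) <= M2 * (C1 * rpow W (g1 - g) * rpow (bwidth n K) g)) by (apply Rmult_le_compat_l; lra).
  set (r := rpow (bwidth n K) g) in *.
  assert (E: (M1 * (C2 * rpow W (g2 - g)) + M2 * (C1 * rpow W (g1 - g)) + 1) * r = M1 * (C2 * rpow W (g2 - g) * r) + M2 * (C1 * rpow W (g1 - g) * r) + r) by ring.
  fold M1 M2. lra.
Qed.

Lemma Good_abs n Om Q : Good n Om Q -> Good n Om (fun K => iabs (Q K)).
Proof.
  intros [P1 [I1 [C1 [g1 [HC1 [Hg1 H1]]]]]].
  split; [intros; apply proper_abs; auto|split].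
  intros K K' HK S HK'. apply subI_abs; auto. apply P1; auto. eapply bsub_trans; eauto.
  exists C1, g1. split; auto. split; auto. intros K HK HKO. eapply Rle_trans. apply width_abs; auto. auto.
Qed.

Lemma iabs_lo_ge0 X : 0 <= lo (iabs X).
Proof. unfold iabs; simpl. destruct (Rle_dec 0 (lo X)); auto. destruct (Rle_dec (hi X) 0); lra. Qed.

Lemma Good_powabs n Om Q p : 1 <= p -> bproper n Om -> Good n Om Q -> Good n Om (fun K => ipow (iabs (Q K)) p).
Proof.
  intros Hp HOm G. apply Good_abs in G.
  destruct G as [P1 [I1 [C1 [g1 [HC1 [Hg1 H1]]]]]].
  split; [intros; apply proper_pow; auto; lra|split].
  intros K K' HK S HK'. apply subI_pow; auto. lra. apply iabs_lo_ge0.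
  set (M := hi (iabs (Q Om))).
  exists (p * rpow M (p - 1) * C1 + 1), g1.
  split. pose proof (rpow_ge0 M (p-1)). assert (0 <= p * rpow M (p - 1) * C1) by (apply Rmult_le_pos; nra). lra.
  split; auto. intros K HK HKO.
  eapply Rle_trans. apply (width_pow _ _ M). auto. apply iabs_lo_ge0. apply P1; auto.
  destruct (I1 K Om HK HKO (bsub_refl _ _)). unfold M. lra.
  pose proof (H1 K HK HKO). pose proof (rpow_ge0 (bwidth n K) g1). pose proof (rpow_ge0 M (p-1)).
  assert (p * rpow M (p - 1) * width (iabs (Q K)) <= p * rpow M (p - 1) * (C1 * rpow (bwidth n K) g1))
    by (apply Rmult_le_compat_l; nra).
  set (r := rpow (bwidth n K) g1) in *. set (q := p * rpow M (p - 1)) in *.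
  assert (E : (q * C1 + 1) * r = q * (C1 * r) + r) by ring. lra.
Qed.

Lemma Good_sum n Om m F : 0 < bwidth n Om -> (forall j, (j < m)%nat -> Good n Om (F j)) ->
  Good n Om (fun K => isum m (fun j => F j K)).
Proof.
  intros HW. induction m; intros H; simpl. apply Good_pt.
  apply (Good_add n Om (fun K => isum m (fun j => F j K)) (F m)); auto.
Qed.

Lemma enc_proper s Sg X : enclosure_IR s Sg -> proper X -> proper (Sg X).
Proof. intros [_ H] HX. apply (inI_proper (s (lo X))). apply H; auto. unfold inI, proper in *; lra. Qed.

Lemma Good_Sg n Om Q s Sg : enclosure_IR s Sg -> holder_IR Sg -> Good n Om Q -> Good n Om (fun K => Sg (Q K)).
Proof.
  intros E [CS [gS [HCS [HgS HS]]]] [P1 [I1 [C1 [g1 [HC1 [Hg1 H1]]]]]].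
  split; [intros; eapply enc_proper; eauto|split].
  intros K K' HK S HK'. apply (proj1 E). apply P1; auto. eapply bsub_trans; eauto. auto.
  exists (CS * rpow C1 gS + 1), (g1 * gS).
  split. pose proof (rpow_ge0 C1 gS). nra. split. nra.
  intros K HK HKO. eapply Rle_trans. apply HS; auto.
  assert (rpow (width (Q K)) gS <= rpow (C1 * rpow (bwidth n K) g1) gS) by (apply rpow_le; [lra| auto]).
  rewrite rpow_mult in H by (auto using rpow_ge0; lra). rewrite rpow_rpow in H by apply bwidth_ge0.
  pose proof (rpow_ge0 C1 gS). pose proof (rpow_ge0 (bwidth n K) (g1 * gS)).
  assert (CS * rpow (width (Q K)) gS <= CS * (rpow C1 gS * rpow (bwidth n K) (g1 * gS))) by (apply Rmult_le_compat_l; lra).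
  nra.
Qed.

Lemma Good_imxmul n Om n1 (A B : box -> nat -> nat -> Itv) i j :
  bproper n Om -> 0 < bwidth n Om ->
  (forall l, (l < n1)%nat -> Good n Om (fun K => A K i l)) ->
  (forall l, (l < n1)%nat -> Good n Om (fun K => B K l j)) ->
  Good n Om (fun K => imxmul n1 (A K) (B K) i j).
Proof.
  intros HOm HW HA HB. unfold imxmul.
  apply (Good_sum n Om n1 (fun l K => imul (A K i l) (B K l j))); auto.
  intros l Hl. apply Good_mul; auto.
Qed.

Lemma Good_idiag n Om (v : box -> nat -> Itv) n1 l j :
  (l < n1)%nat -> (forall l, (l < n1)%nat -> Good n Om (fun K => v K l)) ->
  Good n Om (fun K => idiag (v K) l j).
Proof.
  intros Hl H. unfold idiag. destruct (Nat.eqb l j). apply H; auto. apply Good_pt.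
Qed.

Lemma Good_izstep n Om N k (X : box -> nat -> Itv) i :
  bproper n Om -> 0 < bwidth n Om ->
  (forall j, (j < nd N k)%nat -> Good n Om (fun K => X K j)) ->
  Good n Om (fun K => izstep N k (X K) i).
Proof.
  intros HOm HW H. unfold izstep.
  apply (Good_add n Om (fun K => isum (nd N k) (fun j => imul (pt (nW N k i j)) (X K j))) (fun _ => pt (nb N k i))); auto.
  apply (Good_sum n Om (nd N k) (fun j K => imul (pt (nW N k i j)) (X K j))); auto.
  intros j Hj. apply Good_mul; auto. apply Good_pt.
  apply Good_pt.
Qed.

Lemma Good_iX N Om s Sg k i :
  bproper (nd N 0) Om -> 0 < bwidth (nd N 0) Om -> enclosure_IR s Sg -> holder_IR Sg ->
  (i < nd N k)%nat -> Good (nd N 0) Om (fun K => iX N Sg k K i).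
Proof.
  intros HOm HW E Hh. revert i. induction k; intros i Hi; simpl.
  - apply Good_coord; auto.
  - apply (Good_Sg _ _ (fun K => izstep N k (iX N Sg k K) i) s); auto.
    apply Good_izstep; auto.
Qed.

Lemma Fval_S N Sg k K : Fval N Sg (k + 1) K = izstep N k (iX N Sg k K).
Proof. replace (k + 1)%nat with (S k) by lia. reflexivity. Qed.

Lemma Good_Fval N Om s Sg k i :
  bproper (nd N 0) Om -> 0 < bwidth (nd N 0) Om -> enclosure_IR s Sg -> holder_IR Sg ->
  Good (nd N 0) Om (fun K => Fval N Sg (k + 1) K i).
Proof.
  intros. replace (k + 1)%nat with (S k) by lia. simpl.
  apply (Good_izstep _ _ N k (fun K => iX N Sg k K)); auto.
  intros j Hj. apply Good_iX with (s := s); auto.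
Qed.

Lemma Good_jac N Om s s' Sg Sg1 m i a :
  bproper (nd N 0) Om -> 0 < bwidth (nd N 0) Om -> enclosure_IR s Sg -> holder_IR Sg ->
  enclosure_IR s' Sg1 -> holder_IR Sg1 ->
  Good (nd N 0) Om (fun K => jac_aux N Sg Sg1 K m i a).
Proof.
  intros HOm HW E Hh E1 Hh1. revert i a. induction m; intros i a; simpl.
  - unfold ptm. apply Good_pt.
  - set (k := (nL N - S m)%nat).
    apply (Good_imxmul _ _ _ (fun K => imxmul (nd N (k + 1)) (jac_aux N Sg Sg1 K m)
                (idiag (fun l => Sg1 (Fval N Sg (k + 1) K l)))) (fun _ => ptm (nW N k))); auto.
    + intros l Hl. apply (Good_imxmul _ _ _ (fun K => jac_aux N Sg Sg1 K m) (fun K => idiag (fun l0 => Sg1 (Fval N Sg (k + 1) K l0)))); auto.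
      intros l0 Hl0. apply (Good_idiag _ _ (fun K l1 => Sg1 (Fval N Sg (k + 1) K l1)) (nd N (k+1))); auto.
      intros l1 _. apply (Good_Sg _ _ (fun K => Fval N Sg (k + 1) K l1) s'); auto. apply Good_Fval with (s := s); auto.
    + intros. unfold ptm. apply Good_pt.
Qed.

Lemma Good_hess N Om s s' s'' Sg Sg1 Sg2 i m a b :
  bproper (nd N 0) Om -> 0 < bwidth (nd N 0) Om -> enclosure_IR s Sg -> holder_IR Sg ->
  enclosure_IR s' Sg1 -> holder_IR Sg1 -> enclosure_IR s'' Sg2 -> holder_IR Sg2 ->
  Good (nd N 0) Om (fun K => hess_aux N Sg Sg1 Sg2 K i m a b).
Proof.
  intros HOm HW E Hh E1 Hh1 E2 Hh2. revert a b. induction m; intros a b; simpl.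
  - apply Good_pt.
  - set (k := (nL N - S m)%nat). set (n1 := nd N (k + 1)).
    assert (GD : forall l j, (l < n1)%nat -> Good (nd N 0) Om (fun K => idiag (fun l0 => Sg1 (Fval N Sg (k + 1) K l0)) l j)).
    { intros l j Hl. apply (Good_idiag _ _ (fun K l1 => Sg1 (Fval N Sg (k + 1) K l1)) n1); auto.
      intros l1 _. apply (Good_Sg _ _ (fun K => Fval N Sg (k + 1) K l1) s'); auto. apply Good_Fval with (s := s); auto. }
    assert (GW : forall l j, Good (nd N 0) Om (fun K => ptm (nW N k) l j)) by (intros; apply Good_pt).
    assert (GWt : forall l j, Good (nd N 0) Om (fun K => ptmT (nW N k) l j)) by (intros; apply Good_pt).
    unfold imxadd.
    apply Good_add; auto.
    + apply (Good_imxmul _ _ _ (fun K => imxmul n1 (imxmul n1 (imxmul n1 (ptmT (nW N k)) (idiag (fun l => Sg1 (Fval N Sg (k + 1) K l)))) (hess_aux N Sg Sg1 Sg2 K i m)) (idiag (fun l => Sg1 (Fval N Sg (k + 1) K l)))) (fun _ => ptm (nW N k))); auto.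
      intros l Hl.
      apply (Good_imxmul _ _ _ (fun K => imxmul n1 (imxmul n1 (ptmT (nW N k)) (idiag (fun l => Sg1 (Fval N Sg (k + 1) K l)))) (hess_aux N Sg Sg1 Sg2 K i m)) (fun K => idiag (fun l => Sg1 (Fval N Sg (k + 1) K l)))); auto.
      intros l0 Hl0.
      apply (Good_imxmul _ _ _ (fun K => imxmul n1 (ptmT (nW N k)) (idiag (fun l => Sg1 (Fval N Sg (k + 1) K l)))) (fun K => hess_aux N Sg Sg1 Sg2 K i m)); auto.
      intros l1 Hl1.
      apply (Good_imxmul _ _ _ (fun _ => ptmT (nW N k)) (fun K => idiag (fun l => Sg1 (Fval N Sg (k + 1) K l)))); auto.
    + apply (Good_imxmul _ _ _ (fun K => imxmul n1 (ptmT (nW N k)) (idiag (fun l => imul (Sg2 (Fval N Sg (k + 1) K l)) (jac_aux N Sg Sg1 K m i l)))) (fun _ => ptm (nW N k))); auto.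
      intros l Hl.
      apply (Good_imxmul _ _ _ (fun _ => ptmT (nW N k)) (fun K => idiag (fun l => imul (Sg2 (Fval N Sg (k + 1) K l)) (jac_aux N Sg Sg1 K m i l)))); auto.
      intros l0 Hl0. apply (Good_idiag _ _ (fun K l1 => imul (Sg2 (Fval N Sg (k + 1) K l1)) (jac_aux N Sg Sg1 K m i l1)) n1); auto.
      intros l1 _. apply Good_mul; auto.
      apply (Good_Sg _ _ (fun K => Fval N Sg (k + 1) K l1) s''); auto. apply Good_Fval with (s := s); auto.
      apply Good_jac with (s := s) (s' := s'); auto.
Qed.

Lemma Good_F N Om s s' s'' Sg Sg1 Sg2 p :
  1 <= p -> bproper (nd N 0) Om -> 0 < bwidth (nd N 0) Om -> enclosure_IR s Sg -> holder_IR Sg ->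
  enclosure_IR s' Sg1 -> holder_IR Sg1 -> enclosure_IR s'' Sg2 -> holder_IR Sg2 ->
  Good (nd N 0) Om (F_Phi N Sg Sg1 Sg2 p).
Proof.
  intros Hp HOm HW E Hh E1 Hh1 E2 Hh2. unfold F_Phi.
  apply (Good_sum _ _ _ (fun i K => iadd (iadd (ipow (iabs (Fval N Sg (nL N + 1) K i)) p)
               (isum (nd N 0) (fun j => ipow (iabs (Jac N Sg Sg1 0 K i j)) p)))
         (isum (nd N 0) (fun j => isum (nd N 0 - j) (fun t =>
               ipow (iabs (Hess N Sg Sg1 Sg2 i 0 K j (j + t))) p))))); auto.
  intros i _. apply Good_add; auto. apply Good_add; auto.
  - apply (Good_powabs _ _ (fun K => Fval N Sg (nL N + 1) K i)); auto. apply Good_Fval with (s := s); auto.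
  - apply (Good_sum _ _ _ (fun j K => ipow (iabs (Jac N Sg Sg1 0 K i j)) p)); auto.
    intros j _. apply (Good_powabs _ _ (fun K => Jac N Sg Sg1 0 K i j)); auto.
    unfold Jac. apply Good_jac with (s := s) (s' := s'); auto.
  - apply (Good_sum _ _ _ (fun j K => isum (nd N 0 - j) (fun t => ipow (iabs (Hess N Sg Sg1 Sg2 i 0 K j (j + t))) p))); auto.
    intros j _. apply (Good_sum _ _ _ (fun t K => ipow (iabs (Hess N Sg Sg1 Sg2 i 0 K j (j + t))) p)); auto.
    intros t _. apply (Good_powabs _ _ (fun K => Hess N Sg Sg1 Sg2 i 0 K j (j + t))); auto.
    unfold Hess. apply Good_hess with (s := s) (s' := s') (s'' := s''); auto.
Qed.

Lemma isd_plus f g x a b : is_derive f x a -> is_derive g x b -> is_derive (fun t : R => f t + g t) x (a + b).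
Proof. intros. apply (is_derive_plus f g x a b); auto. Qed.
Lemma isd_mult f g x a b : is_derive f x a -> is_derive g x b -> is_derive (fun t : R => f t * g t) x (a * g x + f x * b).
Proof. intros. apply (is_derive_mult f g x a b); auto. intros; apply Rmult_comm. Qed.
Lemma isd_comp f g x a b : is_derive f (g x) a -> is_derive g x b -> is_derive (fun t : R => f (g t)) x (b * a).
Proof. intros. apply (is_derive_comp f g x a b); auto. Qed.
Lemma isd_const (c x : R) : @is_derive R_AbsRing R_NormedModule (fun _ : R => c) x 0.
Proof. apply (is_derive_const c x). Qed.
Lemma isd_id (x : R) : is_derive (fun t : R => t) x 1.
Proof. apply (is_derive_id x). Qed.
Lemma isd_val (f : R -> R) (x a b : R) : is_derive f x a -> a = b -> is_derive f x b.
Proof. intros; subst; auto. Qed.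
Lemma isd_ext (f g : R -> R) (x a : R) : (forall t, f t = g t) -> is_derive f x a -> is_derive g x a.
Proof. intros. eapply is_derive_ext; eauto. Qed.
Lemma isd_scal c f x a : is_derive f x a -> is_derive (fun t : R => c * f t) x (c * a).
Proof. intros. apply is_derive_scal; auto. Qed.
Lemma isd_rsum n (f : nat -> R -> R) (df : nat -> R) x :
  (forall j, (j < n)%nat -> is_derive (f j) x (df j)) -> is_derive (fun t : R => rsum n (fun j => f j t)) x (rsum n df).
Proof.
  induction n; simpl; intros H. apply isd_const.
  apply isd_plus. apply IHn; intros; apply H; lia. apply H; lia.
Qed.

Definition zv (N : Net) (s : R -> R) (l : nat) (u : nat -> R) (i : nat) : R :=
  rsum (nd N l) (fun m => nW N l i m * xval N s l u m) + nb N l i.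

Lemma xval_S N s l u i : xval N s (S l) u i = s (zv N s l u i).
Proof. reflexivity. Qed.
Lemma Phi_zv N s i u : Phi N s i u = zv N s (nL N) u i.
Proof. reflexivity. Qed.

Fixpoint dxv (N : Net) (s s' : R -> R) (c : nat) (l : nat) (u : nat -> R) : nat -> R :=
  match l with
  | O => fun m => if Nat.eqb m c then 1 else 0
  | S k => fun i => s' (zv N s k u i) * rsum (nd N k) (fun m => nW N k i m * dxv N s s' c k u m)
  end.
Definition dzv N s s' c l u i := rsum (nd N l) (fun m => nW N l i m * dxv N s s' c l u m).

Fixpoint ddxv (N : Net) (s s' s'' : R -> R) (c e : nat) (l : nat) (u : nat -> R) : nat -> R :=
  match l with
  | O => fun _ => 0
  | S k => fun i => s'' (zv N s k u i) * dzv N s s' c k u i * dzv N s s' e k u i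
                    + s' (zv N s k u i) * rsum (nd N k) (fun m => nW N k i m * ddxv N s s' s'' c e k u m)
  end.
Definition ddzv N s s' s'' c e l u i := rsum (nd N l) (fun m => nW N l i m * ddxv N s s' s'' c e l u m).

Lemma upd_same (x : nat -> R) j : upd x j (x j) = x.
Proof. apply functional_extensionality. intros m. unfold upd. destruct (Nat.eqb_spec m j); subst; auto. Qed.

Lemma upd_upd (x : nat -> R) j a b : upd (upd x j a) j b = upd x j b.
Proof. apply functional_extensionality. intros m. unfold upd. destruct (Nat.eqb m j); auto. Qed.

Lemma upd_at (x : nat -> R) j a : upd x j a j = a.
Proof. unfold upd. rewrite Nat.eqb_refl; auto. Qed.

Lemma d_xval N s s' (Hs : forall x, is_derive s x (s' x)) c (y : nat -> R) l : forall m (t0 : R),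
  is_derive (fun t : R => xval N s l (upd y c t) m) t0 (dxv N s s' c l (upd y c t0) m).
Proof.
  induction l; intros m t0.
  - simpl. unfold upd. destruct (Nat.eqb m c). apply isd_id. apply isd_const.
  - simpl. eapply isd_val. apply (isd_comp s (fun t => zv N s l (upd y c t) m)).
    apply Hs. unfold zv. apply isd_plus.
    apply isd_rsum. intros j _. apply isd_scal. apply IHl. apply isd_const.
    rewrite Rplus_0_r; apply Rmult_comm.
Qed.

Lemma d_zv N s s' (Hs : forall x, is_derive s x (s' x)) c (y : nat -> R) l m (t0 : R) :
  is_derive (fun t : R => zv N s l (upd y c t) m) t0 (dzv N s s' c l (upd y c t0) m).
Proof.
  unfold zv, dzv. eapply isd_val. apply isd_plus. apply isd_rsum. intros j _. apply isd_scal. apply d_xval; auto.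
  apply isd_const. ring.
Qed.

Lemma d_dxv N s s' s'' (Hs : forall x, is_derive s x (s' x)) (Hs' : forall x, is_derive s' x (s'' x)) c e (y : nat -> R) l : forall m (t0 : R),
  is_derive (fun t : R => dxv N s s' c l (upd y e t) m) t0 (ddxv N s s' s'' c e l (upd y e t0) m).
Proof.
  induction l; intros m t0.
  - simpl. apply isd_const.
  - simpl. eapply isd_val. apply isd_mult.
    apply (isd_comp s' (fun t => zv N s l (upd y e t) m)). apply Hs'. apply d_zv; auto.
    apply isd_rsum. intros j _. apply isd_scal. apply IHl.
    cbv beta. unfold dzv. ring.
Qed.

Lemma d_dzv N s s' s'' (Hs : forall x, is_derive s x (s' x)) (Hs' : forall x, is_derive s' x (s'' x)) c e (y : nat -> R) l m (t0 : R) :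
  is_derive (fun t : R => dzv N s s' c l (upd y e t) m) t0 (ddzv N s s' s'' c e l (upd y e t0) m).
Proof.
  unfold dzv, ddzv. apply isd_rsum. intros j _. apply isd_scal. apply d_dxv; auto.
Qed.

Lemma pd_Phi N s s' (Hs : forall x, is_derive s x (s' x)) c i :
  pd c (Phi N s i) = fun y => dzv N s s' c (nL N) y i.
Proof.
  apply functional_extensionality. intros y. unfold pd.
  apply is_derive_unique. rewrite <- (upd_same y c) at 2.
  apply (d_zv N s s' Hs c y (nL N) i (y c)).
Qed.

Lemma pd_pd_Phi N s s' s'' (Hs : forall x, is_derive s x (s' x)) (Hs' : forall x, is_derive s' x (s'' x)) c e i :
  pd e (pd c (Phi N s i)) = fun y => ddzv N s s' s'' c e (nL N) y i.
Proof.
  rewrite (pd_Phi N s s' Hs). apply functional_extensionality. intros y. unfold pd.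
  apply is_derive_unique. rewrite <- (upd_same y e) at 2.
  apply (d_dzv N s s' s'' Hs Hs' c e y (nL N) i (y e)).
Qed.

Definition rmxmul (n : nat) (A B : nat -> nat -> R) : nat -> nat -> R :=
  fun i j => rsum n (fun l => A i l * B l j).
Definition rdiag (v : nat -> R) : nat -> nat -> R := fun i j => if Nat.eqb i j then v i else 0.
Definition rT (M : nat -> nat -> R) : nat -> nat -> R := fun i j => M j i.

Fixpoint jacR (N : Net) (s s' : R -> R) (u : nat -> R) (m : nat) : nat -> nat -> R :=
  match m with
  | O => nW N (nL N)
  | S m' => let k := (nL N - S m')%nat in
      rmxmul (nd N (k + 1)) (rmxmul (nd N (k + 1)) (jacR N s s' u m') (rdiag (fun l => s' (zv N s k u l)))) (nW N k)
  end.

Fixpoint hessR (N : Net) (s s' s'' : R -> R) (u : nat -> R) (i : nat) (m : nat) : nat -> nat -> R :=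
  match m with
  | O => fun _ _ => 0
  | S m' => let k := (nL N - S m')%nat in let n1 := nd N (k + 1) in
      let D := rdiag (fun l => s' (zv N s k u l)) in
      fun a b =>
      rmxmul n1 (rmxmul n1 (rmxmul n1 (rmxmul n1 (rT (nW N k)) D) (hessR N s s' s'' u i m')) D) (nW N k) a b
      + rmxmul n1 (rmxmul n1 (rT (nW N k)) (rdiag (fun l => s'' (zv N s k u l) * jacR N s s' u m' i l))) (nW N k) a b
  end.

Lemma inI_mxmul n A B A' B' i j : (forall i l, inI (A i l) (A' i l)) -> (forall l j, inI (B l j) (B' l j)) ->
  inI (rmxmul n A B i j) (imxmul n A' B' i j).
Proof. intros HA HB. unfold rmxmul, imxmul. apply inI_sum. intros; apply inI_mul; auto. Qed.

Lemma inI_diag v V i j : (forall l, inI (v l) (V l)) -> inI (rdiag v i j) (idiag V i j).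
Proof. intros H. unfold rdiag, idiag. destruct (Nat.eqb i j); auto. apply inI_pt. Qed.

Lemma enc_in s Sg x X : enclosure_IR s Sg -> inI x X -> inI (s x) (Sg X).
Proof. intros [_ H] Hx. apply H; auto. eapply inI_proper; eauto. Qed.

Lemma in_iX N s Sg u K : enclosure_IR s Sg -> inbox (nd N 0) u K ->
  forall k i, (i < nd N k)%nat -> inI (xval N s k u i) (iX N Sg k K i).
Proof.
  intros E Hu k. induction k; intros i Hi; simpl. apply Hu; auto.
  apply (enc_in s Sg); auto. unfold izstep. apply inI_add. apply inI_sum. intros j Hj. apply inI_mul. apply inI_pt. apply IHk; auto.
  apply inI_pt.
Qed.

Lemma Fval_S' N Sg k K : Fval N Sg (k + 1) K = izstep N k (iX N Sg k K).
Proof. replace (k + 1)%nat with (S k) by lia. reflexivity. Qed.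

Lemma in_Fval N s Sg u K : enclosure_IR s Sg -> inbox (nd N 0) u K ->
  forall k i, inI (zv N s k u i) (Fval N Sg (k + 1) K i).
Proof.
  intros E Hu k i. rewrite Fval_S'. unfold izstep, zv. apply inI_add. apply inI_sum. intros j Hj. apply inI_mul. apply inI_pt.
  apply (in_iX N s Sg u K); auto. apply inI_pt.
Qed.

Lemma in_jac N s s' Sg Sg1 u K : enclosure_IR s Sg -> enclosure_IR s' Sg1 -> inbox (nd N 0) u K ->
  forall m i a, inI (jacR N s s' u m i a) (jac_aux N Sg Sg1 K m i a).
Proof.
  intros E E1 Hu m. induction m; intros i a; simpl. apply inI_pt.
  apply inI_mxmul; [|intros; apply inI_pt]. intros. apply inI_mxmul; auto.
  intros. apply inI_diag. intros. apply (enc_in s' Sg1); auto. apply in_Fval; auto.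
Qed.

Lemma in_hess N s s' s'' Sg Sg1 Sg2 u K : enclosure_IR s Sg -> enclosure_IR s' Sg1 -> enclosure_IR s'' Sg2 -> inbox (nd N 0) u K ->
  forall i m a b, inI (hessR N s s' s'' u i m a b) (hess_aux N Sg Sg1 Sg2 K i m a b).
Proof.
  intros E E1 E2 Hu i m. induction m; intros a b; simpl. apply inI_pt.
  unfold imxadd. apply inI_add.
  - apply inI_mxmul; [|intros; apply inI_pt]. intros. apply inI_mxmul; auto.
    2:{ intros. apply inI_diag. intros. apply (enc_in s' Sg1); auto. apply in_Fval; auto. }
    intros. apply inI_mxmul; auto. intros. apply inI_mxmul; [intros; apply inI_pt|].
    intros. apply inI_diag. intros. apply (enc_in s' Sg1); auto. apply in_Fval; auto.
  - apply inI_mxmul; [|intros; apply inI_pt]. intros. apply inI_mxmul; [intros; apply inI_pt|].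
    intros. apply inI_diag. intros. apply inI_mul. apply (enc_in s'' Sg2); auto. apply in_Fval; auto.
    apply in_jac with (Sg := Sg) (s := s); auto.
Qed.

Lemma rmxmul_diag_r n A v i b : (b < n)%nat -> rmxmul n A (rdiag v) i b = A i b * v b.
Proof.
  intros Hb. unfold rmxmul, rdiag.
  rewrite (rsum_ext _ _ (fun c => if Nat.eqb c b then A i c * v c else 0)).
  apply rsum_delta; auto.
  intros j _. destruct (Nat.eqb_spec j b); subst; ring.
Qed.

Lemma rsum_mult_rsum n m f g : rsum n f * rsum m g = rsum n (fun a => rsum m (fun b => f a * g b)).
Proof.
  rewrite <- rsum_scal_r. apply rsum_ext. intros a _. rewrite <- rsum_scal_l. reflexivity.
Qed.

Lemma jac_inv N s s' u c i : forall m, (m <= nL N)%nat ->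
  rsum (nd N (nL N - m)) (fun a => jacR N s s' u m i a * dxv N s s' c (nL N - m) u a)
  = dzv N s s' c (nL N) u i.
Proof.
  induction m; intros Hm.
  - simpl. rewrite Nat.sub_0_r. reflexivity.
  - rewrite <- IHm by lia. simpl jacR.
    set (k := (nL N - S m)%nat). replace (nL N - m)%nat with (k + 1)%nat by (unfold k; lia).
    set (n1 := nd N (k + 1)). set (v := fun l => s' (zv N s k u l)).
    transitivity (rsum (nd N k) (fun a => rsum n1 (fun b => jacR N s s' u m i b * v b * nW N k b a) * dxv N s s' c k u a)).
    { apply rsum_ext. intros a _. f_equal. unfold rmxmul at 1. apply rsum_ext. intros b Hb.
      fold (rmxmul n1 (jacR N s s' u m) (rdiag v) i b). rewrite rmxmul_diag_r; auto. }
    rewrite (rsum_ext _ _ (fun a => rsum n1 (fun b => jacR N s s' u m i b * v b * (nW N k b a * dxv N s s' c k u a)))).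
    2:{ intros a _. rewrite <- rsum_scal_r. apply rsum_ext; intros; ring. }
    rewrite rsum_swap. apply rsum_ext. intros b _.
    replace (k + 1)%nat with (S k) by lia. simpl dxv. unfold v.
    rewrite <- rsum_scal_l, <- rsum_scal_l. apply rsum_ext; intros; ring.
Qed.
Lemma bilin n m x y P Q H :
  rsum m (fun a => rsum m (fun b => x a * rsum n (fun c1 => rsum n (fun c3 => P c3 a * H c3 c1) * Q c1 b) * y b))
  = rsum n (fun c3 => rsum n (fun c1 => rsum m (fun a => P c3 a * x a) * H c3 c1 * rsum m (fun b => Q c1 b * y b))).
Proof.
  transitivity (rsum m (fun a => rsum m (fun b => rsum n (fun c1 => rsum n (fun c3 => x a * P c3 a * H c3 c1 * Q c1 b * y b))))).
  { apply rsum_ext; intros a _. apply rsum_ext; intros b _.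
    rewrite <- rsum_scal_l, <- rsum_scal_r. apply rsum_ext; intros c1 _.
    rewrite <- rsum_scal_r, <- rsum_scal_l, <- rsum_scal_r. apply rsum_ext; intros; ring. }
  transitivity (rsum m (fun a => rsum n (fun c1 => rsum n (fun c3 => rsum m (fun b => x a * P c3 a * H c3 c1 * Q c1 b * y b))))).
  { apply rsum_ext; intros a _. rewrite rsum_swap. apply rsum_ext; intros c1 _. rewrite rsum_swap. reflexivity. }
  transitivity (rsum n (fun c3 => rsum n (fun c1 => rsum m (fun a => rsum m (fun b => x a * P c3 a * H c3 c1 * Q c1 b * y b))))).
  { rewrite rsum_swap. transitivity (rsum n (fun c1 => rsum n (fun c3 => rsum m (fun a => rsum m (fun b => x a * P c3 a * H c3 c1 * Q c1 b * y b))))).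
    apply rsum_ext; intros c1 _. rewrite rsum_swap. reflexivity. apply rsum_swap. }
  apply rsum_ext; intros c3 _. apply rsum_ext; intros c1 _.
  rewrite <- rsum_scal_r. rewrite rsum_mult_rsum. apply rsum_ext; intros a _. apply rsum_ext; intros; ring.
Qed.

Lemma bilin2 n m x y P Q q :
  rsum m (fun a => rsum m (fun b => x a * rsum n (fun c1 => P c1 a * q c1 * Q c1 b) * y b))
  = rsum n (fun c1 => q c1 * rsum m (fun a => P c1 a * x a) * rsum m (fun b => Q c1 b * y b)).
Proof.
  transitivity (rsum m (fun a => rsum m (fun b => rsum n (fun c1 => x a * P c1 a * q c1 * Q c1 b * y b)))).
  { apply rsum_ext; intros a _. apply rsum_ext; intros b _.
    rewrite <- rsum_scal_l, <- rsum_scal_r. apply rsum_ext; intros; ring. }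
  transitivity (rsum n (fun c1 => rsum m (fun a => rsum m (fun b => x a * P c1 a * q c1 * Q c1 b * y b)))).
  { transitivity (rsum m (fun a => rsum n (fun c1 => rsum m (fun b => x a * P c1 a * q c1 * Q c1 b * y b)))).
    apply rsum_ext; intros a _. apply rsum_swap. apply rsum_swap. }
  apply rsum_ext; intros c1 _. rewrite Rmult_assoc. rewrite rsum_mult_rsum. rewrite <- rsum_scal_l.
  apply rsum_ext; intros a _. rewrite <- rsum_scal_l. apply rsum_ext; intros; ring.
Qed.

Lemma hessR_S N s s' s'' u i m a b :
  let k := (nL N - S m)%nat in let n1 := nd N (k + 1) in
  let v := fun l => s' (zv N s k u l) in
  let q := fun l => s'' (zv N s k u l) * jacR N s s' u m i l in
  hessR N s s' s'' u i (S m) a b =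
    rsum n1 (fun c1 => rsum n1 (fun c3 => (nW N k c3 a * v c3) * hessR N s s' s'' u i m c3 c1) * (v c1 * nW N k c1 b))
  + rsum n1 (fun c1 => nW N k c1 a * q c1 * nW N k c1 b).
Proof.
  intros k n1 v q. simpl hessR. fold k n1. f_equal.
  - unfold rmxmul at 1. apply rsum_ext. intros c1 Hc1.
    fold (rmxmul n1 (rmxmul n1 (rmxmul n1 (rT (nW N k)) (rdiag v)) (hessR N s s' s'' u i m)) (rdiag v) a c1).
    rewrite rmxmul_diag_r by auto. unfold rmxmul at 1. rewrite Rmult_assoc. f_equal.
    apply rsum_ext. intros c3 Hc3.
    fold (rmxmul n1 (rT (nW N k)) (rdiag v) a c3). rewrite rmxmul_diag_r by auto. reflexivity.
  - unfold rmxmul at 1. apply rsum_ext. intros c1 Hc1.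
    fold (rmxmul n1 (rT (nW N k)) (rdiag q) a c1). rewrite rmxmul_diag_r by auto. reflexivity.
Qed.

Lemma hess_inv N s s' s'' u c e i : forall m, (m <= nL N)%nat ->
  rsum (nd N (nL N - m)) (fun a => rsum (nd N (nL N - m)) (fun b =>
      dxv N s s' c (nL N - m) u a * hessR N s s' s'' u i m a b * dxv N s s' e (nL N - m) u b))
  + rsum (nd N (nL N - m)) (fun a => jacR N s s' u m i a * ddxv N s s' s'' c e (nL N - m) u a)
  = ddzv N s s' s'' c e (nL N) u i.
Proof.
  induction m; intros Hm.
  - simpl. rewrite Nat.sub_0_r.
    rewrite (rsum_ext _ _ (fun _ => 0)). rewrite rsum_zero. unfold ddzv. ring.
    intros a _. rewrite (rsum_ext _ _ (fun _ => 0)). apply rsum_zero. intros; ring.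
  - rewrite <- IHm by lia.
    set (k := (nL N - S m)%nat). replace (nL N - m)%nat with (k + 1)%nat by (unfold k; lia).
    set (n1 := nd N (k + 1)). set (v := fun l => s' (zv N s k u l)).
    set (q := fun l => s'' (zv N s k u l) * jacR N s s' u m i l).
    set (x := dxv N s s' c k u). set (y := dxv N s s' e k u).
    set (H := hessR N s s' s'' u i m). set (J := jacR N s s' u m i).
    assert (QF : rsum (nd N k) (fun a => rsum (nd N k) (fun b => x a * hessR N s s' s'' u i (S m) a b * y b))
      = rsum n1 (fun c3 => rsum n1 (fun c1 => rsum (nd N k) (fun a => (nW N k c3 a * v c3) * x a) * H c3 c1 * rsum (nd N k) (fun b => (v c1 * nW N k c1 b) * y b)))
      + rsum n1 (fun c1 => q c1 * rsum (nd N k) (fun a => nW N k c1 a * x a) * rsum (nd N k) (fun b => nW N k c1 b * y b))).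
    { rewrite <- bilin, <- bilin2. rewrite <- rsum_plus. apply rsum_ext; intros a _.
      rewrite <- rsum_plus. apply rsum_ext; intros b _.
      rewrite hessR_S. fold k n1 H. unfold v, q. cbv beta. ring. }
    assert (JP : rsum (nd N k) (fun a => jacR N s s' u (S m) i a * ddxv N s s' s'' c e k u a)
      = rsum n1 (fun c1 => J c1 * v c1 * rsum (nd N k) (fun a => nW N k c1 a * ddxv N s s' s'' c e k u a))).
    { simpl jacR. fold k n1.
      transitivity (rsum (nd N k) (fun a => rsum n1 (fun b => J b * v b * (nW N k b a * ddxv N s s' s'' c e k u a)))).
      { apply rsum_ext. intros a _. unfold rmxmul at 1. rewrite <- rsum_scal_r. apply rsum_ext. intros b Hb.
        fold (rmxmul n1 (jacR N s s' u m) (rdiag v) i b). rewrite rmxmul_diag_r by auto. fold J. unfold v. ring. }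
      rewrite rsum_swap. apply rsum_ext. intros b _. rewrite <- rsum_scal_l. reflexivity. }
    rewrite QF, JP.
    replace (k + 1)%nat with (S k) by lia. fold n1. simpl dxv. simpl ddxv. fold x y.
    rewrite Rplus_assoc. f_equal.
    + apply rsum_ext; intros c3 _. apply rsum_ext; intros c1 _. fold H.
      f_equal. f_equal. unfold v. rewrite <- rsum_scal_l. apply rsum_ext; intros; ring.
      unfold v. rewrite <- rsum_scal_l. apply rsum_ext; intros; ring.
    + rewrite <- rsum_plus. apply rsum_ext; intros c1 _. unfold J, q, dzv. fold x y. unfold v. ring.
Qed.

Lemma rsum_delta_mul n c (f : nat -> R) : (c < n)%nat ->
  rsum n (fun a => f a * (if Nat.eqb a c then 1 else 0)) = f c.
Proof.
  intros Hc. rewrite (rsum_ext _ _ (fun a => if Nat.eqb a c then f a else 0)). apply rsum_delta; auto.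
  intros j _. destruct (Nat.eqb j c); ring.
Qed.

Lemma pd_Phi_val N (s s' : R -> R) (Hs : forall x, is_derive s x (s' x)) i j x : (j < nd N 0)%nat ->
  pd j (Phi N s i) x = jacR N s s' x (nL N) i j.
Proof.
  intros Hj. rewrite (pd_Phi N s s' Hs). rewrite <- (jac_inv N s s' x j i (nL N)) by lia.
  rewrite Nat.sub_diag. simpl dxv. apply rsum_delta_mul; auto.
Qed.

Lemma pd_pd_Phi_val N (s s' s'' : R -> R) (Hs : forall x, is_derive s x (s' x)) (Hs' : forall x, is_derive s' x (s'' x))
  i j k x : (j < nd N 0)%nat -> (k < nd N 0)%nat ->
  pd k (pd j (Phi N s i)) x = hessR N s s' s'' x i (nL N) j k.
Proof.
  intros Hj Hk. rewrite (pd_pd_Phi N s s' s'' Hs Hs'). rewrite <- (hess_inv N s s' s'' x j k i (nL N)) by lia.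
  rewrite Nat.sub_diag. simpl dxv. simpl ddxv.
  set (H := hessR N s s' s'' x i (nL N)).
  rewrite (rsum_ext (nd N 0) (fun a => jacR N s s' x (nL N) i a * 0) (fun _ => 0)) by (intros; ring).
  rewrite rsum_zero, Rplus_0_r.
  rewrite (rsum_ext _ _ (fun a => H a k * (if Nat.eqb a j then 1 else 0))).
  apply (rsum_delta_mul (nd N 0) j (fun a => H a k)); auto.
  intros a _. rewrite <- (rsum_delta_mul (nd N 0) k (fun b => H a b)) by auto.
  rewrite <- rsum_scal_r. apply rsum_ext; intros; ring.
Qed.

Lemma F_contains N (s s' s'' : R -> R) Sg Sg1 Sg2 p K x :
  0 <= p -> (forall x, is_derive s x (s' x)) -> (forall x, is_derive s' x (s'' x)) ->
  enclosure_IR s Sg -> enclosure_IR s' Sg1 -> enclosure_IR s'' Sg2 ->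
  inbox (nd N 0) x K -> inI (f_Phi N s p x) (F_Phi N Sg Sg1 Sg2 p K).
Proof.
  intros Hp Hs Hs' E E1 E2 Hx. unfold f_Phi, F_Phi. apply inI_sum. intros i _.
  apply inI_add; [apply inI_add|].
  - apply inI_pow; auto. apply inI_abs. rewrite Phi_zv. apply in_Fval; auto.
  - apply inI_sum. intros j Hj. apply inI_pow; auto. apply inI_abs.
    rewrite (pd_Phi_val N s s' Hs) by auto. unfold Jac. rewrite Nat.sub_0_r.
    apply (in_jac N s s' Sg Sg1); auto.
  - apply inI_sum. intros j Hj. apply inI_sum. intros t Ht. apply inI_pow; auto. apply inI_abs.
    rewrite (pd_pd_Phi_val N s s' s'' Hs Hs') by lia. unfold Hess. rewrite Nat.sub_0_r.
    apply (in_hess N s s' s'' Sg Sg1 Sg2); auto.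
Qed.

Lemma ball_R (x e y : R) : ball x e y <-> Rabs (y - x) < e.
Proof. unfold ball; simpl; unfold AbsRing_ball, abs, minus; simpl. reflexivity. Qed.

Lemma cont_eps (h : R -> R) x :
  (forall eps, 0 < eps -> exists del, 0 < del /\ forall y, Rabs (y - x) < del -> Rabs (h y - h x) < eps) ->
  continuous h x.
Proof.
  intros H. unfold continuous. apply filterlim_locally. intros eps.
  destruct (H eps (cond_pos eps)) as [d [Hd Hd']]. exists (mkposreal d Hd). intros y Hy.
  apply ball_R. apply ball_R in Hy. simpl in Hy. apply Hd'; auto.
Qed.

Lemma eps_cont (h : R -> R) x : continuous h x ->
  forall eps, 0 < eps -> exists del, 0 < del /\ forall y, Rabs (y - x) < del -> Rabs (h y - h x) < eps.
Proof.
  intros H eps He. unfold continuous in H. apply filterlim_locally with (eps := mkposreal eps He) in H.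
  destruct H as [d Hd]. exists d. split. apply cond_pos. intros y Hy. apply ball_R. apply Hd. apply ball_R; auto.
Qed.

Lemma cont_pt (h : R -> R) x : continuous h x -> continuity_pt h x.
Proof. intros. apply continuity_pt_filterlim. apply H. Qed.

Lemma cont_bounded (h : R -> R) a b : a <= b -> (forall x, continuous h x) ->
  exists M, forall x, a <= x <= b -> Rabs (h x) <= M.
Proof.
  intros Hab H. destruct (continuity_ab_maj h a b Hab) as [x1 [H1 _]]. intros; apply cont_pt; auto.
  destruct (continuity_ab_min h a b Hab) as [x2 [H2 _]]. intros; apply cont_pt; auto.
  exists (Rmax (Rabs (h x1)) (Rabs (h x2))). intros x Hx. specialize (H1 x Hx). specialize (H2 x Hx).
  unfold Rabs, Rmax. repeat destruct Rcase_abs; repeat destruct Rle_dec; lra.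
Qed.

Lemma cont_unif (h : R -> R) a b : (forall x, continuous h x) ->
  forall eps, 0 < eps -> exists del, 0 < del /\ forall x y, a <= x <= b -> a <= y <= b -> Rabs (x - y) < del -> Rabs (h x - h y) < eps.
Proof.
  intros H eps He. destruct (unifcont_normed_1d h a b (fun x _ => H x) (mkposreal eps He)) as [d Hd].
  exists d. split. apply cond_pos. intros x y Hx Hy Hxy.
  specialize (Hd y x Hy Hx). unfold ball_norm in Hd. simpl in Hd.
  assert (ball y d x) by (apply ball_R; auto).
  specialize (Hd H0). unfold norm, minus in Hd; simpl in Hd. unfold abs, plus, opp in Hd; simpl in Hd. exact Hd.
Qed.

Definition inR (n : nat) (R0 : R) (y : nat -> R) : Prop := forall j, (j < n)%nat -> Rabs (y j) <= R0.
Definition close (n : nat) (d : R) (y z : nat -> R) : Prop := forall j, (j < n)%nat -> Rabs (y j - z j) < d.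

Definition UCB (n : nat) (g : (nat -> R) -> R) : Prop :=
  forall R0, 0 <= R0 ->
    (exists M, forall y, inR n R0 y -> Rabs (g y) <= M) /\
    (forall eps, 0 < eps -> exists del, 0 < del /\ forall y z, inR n R0 y -> inR n R0 z -> close n del y z ->
        Rabs (g y - g z) < eps).

Lemma UCB_ext n f g : (forall y, f y = g y) -> UCB n g -> UCB n f.
Proof.
  intros E H R0 HR. destruct (H R0 HR) as [[M HM] HU]. split. exists M. intros; rewrite E; auto.
  intros eps He. destruct (HU eps He) as [d [Hd Hd']]. exists d. split; auto. intros. rewrite !E; auto.
Qed.

Lemma UCB_const n c : UCB n (fun _ => c).
Proof.
  intros R0 HR. split. exists (Rabs c); intros; lra.
  intros eps He. exists 1. split; [lra|]. intros. replace (c - c) with 0 by ring. rewrite Rabs_R0; auto.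
Qed.

Lemma UCB_coord n j : (j < n)%nat -> UCB n (fun y => y j).
Proof.
  intros Hj R0 HR. split. exists R0; intros y Hy; apply Hy; auto.
  intros eps He. exists eps. split; [auto|]. intros y z _ _ Hc. apply Hc; auto.
Qed.

Lemma UCB_plus n f g : UCB n f -> UCB n g -> UCB n (fun y => f y + g y).
Proof.
  intros Hf Hg R0 HR. destruct (Hf R0 HR) as [[M1 HM1] HU1]. destruct (Hg R0 HR) as [[M2 HM2] HU2].
  split. exists (M1 + M2). intros y Hy. eapply Rle_trans. apply Rabs_triang. specialize (HM1 y Hy); specialize (HM2 y Hy); lra.
  intros eps He. destruct (HU1 (eps/2) ltac:(lra)) as [d1 [Hd1 H1]]. destruct (HU2 (eps/2) ltac:(lra)) as [d2 [Hd2 H2]].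
  exists (Rmin d1 d2). split. apply Rmin_case; lra. intros y z Hy Hz Hc.
  assert (close n d1 y z) by (intros j Hj; eapply Rlt_le_trans; [apply Hc; auto| apply Rmin_l]).
  assert (close n d2 y z) by (intros j Hj; eapply Rlt_le_trans; [apply Hc; auto| apply Rmin_r]).
  specialize (H1 y z Hy Hz H). specialize (H2 y z Hy Hz H0).
  replace (f y + g y - (f z + g z)) with ((f y - f z) + (g y - g z)) by ring.
  eapply Rle_lt_trans. apply Rabs_triang. lra.
Qed.

Lemma UCB_mult n f g : UCB n f -> UCB n g -> UCB n (fun y => f y * g y).
Proof.
  intros Hf Hg R0 HR. destruct (Hf R0 HR) as [[M1 HM1] HU1]. destruct (Hg R0 HR) as [[M2 HM2] HU2].
  split. exists (Rabs M1 * Rabs M2). intros y Hy. rewrite Rabs_mult. specialize (HM1 y Hy); specialize (HM2 y Hy).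
  apply Rmult_le_compat; try apply Rabs_pos; eapply Rle_trans; eauto; apply Rle_abs.
  intros eps He. set (A := Rabs M1 + 1). set (B := Rabs M2 + 1).
  assert (HA : 0 < A) by (unfold A; pose proof (Rabs_pos M1); lra). assert (HB : 0 < B) by (unfold B; pose proof (Rabs_pos M2); lra).
  destruct (HU1 (eps / (2 * B)) ltac:(apply Rdiv_lt_0_compat; lra)) as [d1 [Hd1 H1]].
  destruct (HU2 (eps / (2 * A)) ltac:(apply Rdiv_lt_0_compat; lra)) as [d2 [Hd2 H2]].
  exists (Rmin d1 d2). split. apply Rmin_case; lra. intros y z Hy Hz Hc.
  assert (close n d1 y z) by (intros j Hj; eapply Rlt_le_trans; [apply Hc; auto| apply Rmin_l]).
  assert (close n d2 y z) by (intros j Hj; eapply Rlt_le_trans; [apply Hc; auto| apply Rmin_r]).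
  specialize (H1 y z Hy Hz H). specialize (H2 y z Hy Hz H0).
  replace (f y * g y - f z * g z) with (f y * (g y - g z) + g z * (f y - f z)) by ring.
  eapply Rle_lt_trans. apply Rabs_triang. rewrite !Rabs_mult.
  assert (Rabs (f y) <= A) by (unfold A; specialize (HM1 y Hy); pose proof (Rle_abs M1); lra).
  assert (Rabs (g z) <= B) by (unfold B; specialize (HM2 z Hz); pose proof (Rle_abs M2); lra).
  assert (Rabs (f y) * Rabs (g y - g z) <= A * (eps / (2 * A))) by (apply Rmult_le_compat; try apply Rabs_pos; lra).
  assert (Rabs (g z) * Rabs (f y - f z) <= B * (eps / (2 * B))) by (apply Rmult_le_compat; try apply Rabs_pos; lra).
  assert (E1 : A * (eps / (2 * A)) = eps / 2) by (field; lra).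
  assert (E2 : B * (eps / (2 * B)) = eps / 2) by (field; lra).
  assert (Rabs (f y) * Rabs (g y - g z) < eps / 2 \/ Rabs (g z) * Rabs (f y - f z) < eps / 2).
  { destruct (Rle_lt_dec (Rabs (g y - g z)) 0).
    left. assert (Rabs (g y - g z) = 0) by (pose proof (Rabs_pos (g y - g z)); lra). rewrite H7. lra.
    left. apply Rle_lt_trans with (A * Rabs (g y - g z)). apply Rmult_le_compat_r; [apply Rabs_pos|lra].
    rewrite <- E1. apply Rmult_lt_compat_l; lra. }
  destruct H7; lra.
Qed.

Lemma UCB_rsum n m (F : nat -> (nat -> R) -> R) : (forall j, (j < m)%nat -> UCB n (F j)) ->
  UCB n (fun y => rsum m (fun j => F j y)).
Proof.
  induction m; intros H; simpl. apply UCB_const.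
  apply (UCB_plus n (fun y => rsum m (fun j => F j y)) (F m)). apply IHm; intros; apply H; lia. apply H; lia.
Qed.

Lemma UCB_comp n (h : R -> R) g : (forall x, continuous h x) -> UCB n g -> UCB n (fun y => h (g y)).
Proof.
  intros Hh Hg R0 HR. destruct (Hg R0 HR) as [[M HM] HU].
  assert (HM0 : 0 <= Rabs M) by apply Rabs_pos.
  destruct (cont_bounded h (- Rabs M) (Rabs M) ltac:(lra) Hh) as [B HB].
  assert (Hin : forall y, inR n R0 y -> - Rabs M <= g y <= Rabs M).
  { intros y Hy. specialize (HM y Hy). pose proof (Rle_abs M). unfold Rabs in *; destruct Rcase_abs; destruct Rcase_abs; lra. }
  split. exists B. intros y Hy. apply HB; auto.
  intros eps He. destruct (cont_unif h (- Rabs M) (Rabs M) Hh eps He) as [d1 [Hd1 H1]].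
  destruct (HU d1 Hd1) as [d [Hd H2]]. exists d. split; [auto|]. intros y z Hy Hz Hc.
  apply H1; auto.
Qed.

Lemma UCB_cont n g : UCB n g -> cont_Rn n g.
Proof.
  intros H x eps He. set (R0 := rmaxn n (fun j => Rabs (x j)) + 1).
  assert (HR : 0 <= R0). { unfold R0. pose proof (rmaxn_ge0 n (fun j => Rabs (x j))). lra. }
  destruct (H R0 HR) as [_ HU]. destruct (HU eps He) as [d [Hd Hd']].
  exists (Rmin d 1). split. apply Rmin_case; lra. intros y Hy.
  assert (Hx : inR n R0 x). { intros j Hj. unfold R0. pose proof (rmaxn_ge n (fun j => Rabs (x j)) j Hj). simpl in H0. lra. }
  apply Hd'; auto.
  - intros j Hj. specialize (Hy j Hj). pose proof (Rmin_r d 1). pose proof (rmaxn_ge n (fun j => Rabs (x j)) j Hj). simpl in H1.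
    unfold R0. assert (Rabs (y j) <= Rabs (x j) + Rabs (y j - x j)).
    { replace (y j) with (x j + (y j - x j)) at 1 by ring. apply Rabs_triang. }
    lra.
  - intros j Hj. specialize (Hy j Hj). pose proof (Rmin_l d 1). lra.
Qed.

Lemma Rpower_cont_eps a p : 0 < a -> forall eps, 0 < eps ->
  exists del, 0 < del /\ forall b, Rabs (b - a) < del -> Rabs (Rpower b p - Rpower a p) < eps.
Proof.
  intros Ha eps He.
  assert (C : continuity_pt (fun x => Rpower x p) a).
  { apply derivable_continuous_pt. exists (p * Rpower a (p - 1)). apply derivable_pt_lim_power; auto. }
  destruct (C eps He) as [d [Hd Hd']]. exists d. split; auto. intros b Hb.
  destruct (Req_dec b a). subst. replace (Rpower a p - Rpower a p) with 0 by ring. rewrite Rabs_R0; auto.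
  apply (Hd' b). split. split. constructor. intro E; apply H; auto. simpl. unfold R_dist. auto.
Qed.

Lemma rpow_abs_cont p : 1 <= p -> forall x, continuous (fun x => rpow (Rabs x) p) x.
Proof.
  intros Hp x. apply cont_eps. intros eps He.
  destruct (Req_dec x 0).
  - subst. exists (Rmin eps 1). split. apply Rmin_case; lra. intros y Hy.
    rewrite Rabs_R0, (rpow_nonpos 0) by lra. rewrite Rminus_0_r in *.
    pose proof (Rmin_l eps 1). pose proof (Rmin_r eps 1).
    pose proof (rpow_le_self (Rabs y) p Hp ltac:(split; [apply Rabs_pos| lra])).
    rewrite Rabs_right by (apply Rle_ge, rpow_ge0). lra.
  - assert (Ha : 0 < Rabs x) by (apply Rabs_pos_lt; auto).
    destruct (Rpower_cont_eps (Rabs x) p Ha eps He) as [d [Hd Hd']].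
    exists (Rmin d (Rabs x / 2)). split. apply Rmin_case; lra. intros y Hy.
    assert (Hyx : Rabs (Rabs y - Rabs x) <= Rabs (y - x)) by apply Rabs_triang_inv2.
    pose proof (Rmin_l d (Rabs x / 2)). pose proof (Rmin_r d (Rabs x / 2)).
    assert (0 < Rabs y). { unfold Rabs at 1 in Hyx. destruct Rcase_abs; lra. }
    rewrite !rpow_pos by auto. apply Hd'. lra.
Qed.

Lemma deriv_cont (f f' : R -> R) : (forall x, is_derive f x (f' x)) -> forall x, continuous f x.
Proof. intros H x. exact (ex_derive_continuous (K := R_AbsRing) (V := R_NormedModule) f x (ex_intro _ (f' x) (H x))). Qed.

Lemma holder_enc_cont (h : R -> R) Sg : enclosure_IR h Sg -> holder_IR Sg -> forall x, continuous h x.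
Proof.
  intros [_ E] [C [g [HC [Hg H]]]] x. apply cont_eps. intros eps He.
  set (d := rpow (eps / (C + 1)) (1 / g)).
  assert (Hd : 0 < d) by (apply rpow_gt0; apply Rdiv_lt_0_compat; lra).
  exists d. split; auto. intros y Hy.
  set (X := mkItv (Rmin x y) (Rmax x y)).
  assert (HX : proper X) by (unfold proper, X; simpl; apply Rle_trans with x; [apply Rmin_l|apply Rmax_l]).
  assert (I1 : inI (h x) (Sg X)) by (apply E; auto; unfold inI, X; simpl; split; [apply Rmin_l|apply Rmax_l]).
  assert (I2 : inI (h y) (Sg X)) by (apply E; auto; unfold inI, X; simpl; split; [apply Rmin_r|apply Rmax_r]).
  assert (W : width (Sg X) <= C * rpow (width X) g) by (apply H; auto).
  assert (WX : width X = Rabs (y - x)).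
  { unfold width, X; simpl. unfold Rmin, Rmax, Rabs. destruct Rle_dec; destruct Rcase_abs; lra. }
  assert (R1 : rpow (width X) g <= eps / (C + 1)).
  { rewrite WX. eapply Rle_trans. apply rpow_le. lra. left; apply Hy. unfold d.
    rewrite rpow_rpow by (left; apply Rdiv_lt_0_compat; lra). replace (1 / g * g) with 1 by (field; lra).
    rewrite rpow_1 by (left; apply Rdiv_lt_0_compat; lra). lra. }
  assert (Rabs (h y - h x) <= width (Sg X)).
  { unfold inI, width in *. unfold Rabs. destruct Rcase_abs; lra. }
  assert (C * rpow (width X) g <= C * (eps / (C + 1))) by (apply Rmult_le_compat_l; lra).
  assert (C * (eps / (C + 1)) < eps). { replace (C * (eps / (C + 1))) with (eps - eps / (C + 1)) by (field; lra).
    assert (0 < eps / (C + 1)) by (apply Rdiv_lt_0_compat; lra). lra. }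
  lra.
Qed.

Lemma UCB_xval N s (Hs : forall x, continuous s x) : forall l m, (m < nd N l)%nat ->
  UCB (nd N 0) (fun u => xval N s l u m).
Proof.
  induction l; intros m Hm; simpl.
  - apply UCB_coord; auto.
  - apply (UCB_comp _ s (fun u => rsum (nd N l) (fun j => nW N l m j * xval N s l u j) + nb N l m)); auto.
    apply UCB_plus; [|apply UCB_const]. apply (UCB_rsum _ _ (fun j u => nW N l m j * xval N s l u j)).
    intros j Hj. apply UCB_mult. apply UCB_const. apply IHl; auto.
Qed.

Lemma UCB_zv N s (Hs : forall x, continuous s x) l i : UCB (nd N 0) (fun u => zv N s l u i).
Proof.
  unfold zv. apply UCB_plus; [|apply UCB_const]. apply (UCB_rsum _ _ (fun j u => nW N l i j * xval N s l u j)).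
  intros j Hj. apply UCB_mult. apply UCB_const. apply UCB_xval; auto.
Qed.

Lemma UCB_dxv N s s' (Hs : forall x, continuous s x) (Hs' : forall x, continuous s' x) c : forall l m,
  UCB (nd N 0) (fun u => dxv N s s' c l u m).
Proof.
  induction l; intros m; simpl.
  - apply UCB_const.
  - apply UCB_mult. apply (UCB_comp _ s' (fun u => zv N s l u m)); auto. apply UCB_zv; auto.
    apply (UCB_rsum _ _ (fun j u => nW N l m j * dxv N s s' c l u j)). intros j _. apply UCB_mult. apply UCB_const. apply IHl.
Qed.

Lemma UCB_dzv N s s' (Hs : forall x, continuous s x) (Hs' : forall x, continuous s' x) c l i :
  UCB (nd N 0) (fun u => dzv N s s' c l u i).
Proof.
  unfold dzv. apply (UCB_rsum _ _ (fun j u => nW N l i j * dxv N s s' c l u j)). intros j _. apply UCB_mult. apply UCB_const. apply UCB_dxv; auto.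
Qed.

Lemma UCB_ddxv N s s' s'' (Hs : forall x, continuous s x) (Hs' : forall x, continuous s' x) (Hs'' : forall x, continuous s'' x) c e : forall l m,
  UCB (nd N 0) (fun u => ddxv N s s' s'' c e l u m).
Proof.
  induction l; intros m; simpl.
  - apply UCB_const.
  - apply UCB_plus.
    + apply UCB_mult. apply UCB_mult. apply (UCB_comp _ s'' (fun u => zv N s l u m)); auto. apply UCB_zv; auto.
      apply UCB_dzv; auto. apply UCB_dzv; auto.
    + apply UCB_mult. apply (UCB_comp _ s' (fun u => zv N s l u m)); auto. apply UCB_zv; auto.
      apply (UCB_rsum _ _ (fun j u => nW N l m j * ddxv N s s' s'' c e l u j)). intros j _. apply UCB_mult. apply UCB_const. apply IHl.
Qed.

Lemma UCB_ddzv N s s' s'' (Hs : forall x, continuous s x) (Hs' : forall x, continuous s' x) (Hs'' : forall x, continuous s'' x) c e l i :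
  UCB (nd N 0) (fun u => ddzv N s s' s'' c e l u i).
Proof.
  unfold ddzv. apply (UCB_rsum _ _ (fun j u => nW N l i j * ddxv N s s' s'' c e l u j)). intros j _. apply UCB_mult. apply UCB_const. apply UCB_ddxv; auto.
Qed.

Lemma UCB_T0 N s p (Hs : forall x, continuous s x) i : 1 <= p ->
  UCB (nd N 0) (fun x => rpow (Rabs (Phi N s i x)) p).
Proof.
  intros Hp. apply (UCB_comp _ (fun x => rpow (Rabs x) p) (fun x => zv N s (nL N) x i)).
  apply rpow_abs_cont; auto. apply UCB_zv; auto.
Qed.

Lemma UCB_T1 N (s s' : R -> R) p (Hd : forall x, is_derive s x (s' x)) (Hs' : forall x, continuous s' x) i j : 1 <= p ->
  UCB (nd N 0) (fun x => rpow (Rabs (pd j (Phi N s i) x)) p).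
Proof.
  intros Hp. rewrite (pd_Phi N s s' Hd).
  apply (UCB_comp _ (fun x => rpow (Rabs x) p) (fun x => dzv N s s' j (nL N) x i)).
  apply rpow_abs_cont; auto. apply UCB_dzv; auto. apply (deriv_cont s s'); auto.
Qed.

Lemma UCB_T2 N (s s' s'' : R -> R) p (Hd : forall x, is_derive s x (s' x)) (Hd' : forall x, is_derive s' x (s'' x))
  (Hs'' : forall x, continuous s'' x) i j k : 1 <= p ->
  UCB (nd N 0) (fun x => rpow (Rabs (pd k (pd j (Phi N s i)) x)) p).
Proof.
  intros Hp. rewrite (pd_pd_Phi N s s' s'' Hd Hd').
  apply (UCB_comp _ (fun x => rpow (Rabs x) p) (fun x => ddzv N s s' s'' j k (nL N) x i)).
  apply rpow_abs_cont; auto. apply UCB_ddzv; auto. apply (deriv_cont s s'); auto. apply (deriv_cont s' s''); auto.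
Qed.

Lemma UCB_f N (s s' s'' : R -> R) p (Hd : forall x, is_derive s x (s' x)) (Hd' : forall x, is_derive s' x (s'' x))
  (Hs'' : forall x, continuous s'' x) : 1 <= p -> UCB (nd N 0) (f_Phi N s p).
Proof.
  intros Hp. unfold f_Phi.
  apply (UCB_rsum _ _ (fun i x => rpow (Rabs (Phi N s i x)) p
    + rsum (nd N 0) (fun j => rpow (Rabs (pd j (Phi N s i) x)) p)
    + rsum (nd N 0) (fun j => rsum (nd N 0 - j) (fun t => rpow (Rabs (pd (j + t) (pd j (Phi N s i)) x)) p)))).
  intros i _. apply UCB_plus. apply UCB_plus.
  - apply UCB_T0; auto. apply (deriv_cont s s'); auto.
  - apply (UCB_rsum _ _ (fun j x => rpow (Rabs (pd j (Phi N s i) x)) p)). intros j _. apply UCB_T1 with (s' := s'); auto.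
    apply (deriv_cont s' s''); auto.
  - apply (UCB_rsum _ _ (fun j x => rsum (nd N 0 - j) (fun t => rpow (Rabs (pd (j + t) (pd j (Phi N s i)) x)) p))).
    intros j _. apply (UCB_rsum _ _ (fun t x => rpow (Rabs (pd (j + t) (pd j (Phi N s i)) x)) p)).
    intros t _. apply UCB_T2 with (s' := s') (s'' := s''); auto.
Qed.

Lemma exR (f : R -> R) a b : (forall t, continuous f t) -> ex_RInt f a b.
Proof. intros H. apply (ex_RInt_continuous (V := R_CompleteNormedModule) f a b). intros; apply H. Qed.

Lemma RInt_plusR (f g : R -> R) a b : (forall t, continuous f t) -> (forall t, continuous g t) ->
  RInt (fun x => f x + g x) a b = RInt f a b + RInt g a b.
Proof. intros. apply (RInt_plus f g a b); apply exR; auto. Qed.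

Lemma RInt_minusR (f g : R -> R) a b : (forall t, continuous f t) -> (forall t, continuous g t) ->
  RInt (fun x => f x - g x) a b = RInt f a b - RInt g a b.
Proof. intros. apply (RInt_minus f g a b); apply exR; auto. Qed.

Lemma RInt_constR (c a b : R) : RInt (fun _ => c) a b = (b - a) * c.
Proof. rewrite RInt_const. reflexivity. Qed.

Lemma RInt_abs_le (f : R -> R) a b M : (forall t, continuous f t) ->
  (forall t, Rmin a b <= t <= Rmax a b -> Rabs (f t) <= M) -> Rabs (RInt f a b) <= Rabs (b - a) * M.
Proof.
  intros Hc H. destruct (Rle_dec a b).
  - rewrite (Rabs_right (b - a)) by lra. apply abs_RInt_le_const; auto. apply exR; auto.
    intros t Ht. apply H. rewrite Rmin_left, Rmax_right by lra. auto.
  - apply Rnot_le_lt in n. rewrite <- (opp_RInt_swap f b a) by (apply exR; auto).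
    change (Rabs (- RInt f b a) <= Rabs (b - a) * M). rewrite Rabs_Ropp.
    rewrite (Rabs_left (b - a)) by lra. replace (- (b - a)) with (a - b) by ring.
    apply abs_RInt_le_const; try lra. apply exR; auto.
    intros t Ht. apply H. rewrite Rmin_right, Rmax_left by lra. auto.
Qed.

Lemma RInt_le_R (f g : R -> R) a b : a <= b -> (forall t, continuous f t) -> (forall t, continuous g t) ->
  (forall t, a <= t <= b -> f t <= g t) -> RInt f a b <= RInt g a b.
Proof. intros. apply RInt_le; auto; try (apply exR; auto). intros; apply H2; lra. Qed.

Lemma cont_minusR (f g : R -> R) t : continuous f t -> continuous g t -> continuous (fun x => f x - g x) t.
Proof. intros. apply (continuous_minus f g t); auto. Qed.

Lemma UCB_line n h y m : UCB n h -> forall t, continuous (fun s => h (upd y m s)) t.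
Proof.
  intros H t. apply cont_eps. intros eps He.
  set (R0 := rmaxn n (fun j => Rabs (y j)) + Rabs t + 1).
  assert (HR : 0 <= R0) by (unfold R0; pose proof (rmaxn_ge0 n (fun j => Rabs (y j))); pose proof (Rabs_pos t); lra).
  destruct (H R0 HR) as [_ HU]. destruct (HU eps He) as [d [Hd Hd']].
  exists (Rmin d 1). split. apply Rmin_case; lra. intros s Hs.
  pose proof (Rmin_l d 1). pose proof (Rmin_r d 1).
  assert (Hin : forall u, Rabs u <= Rabs t + 1 -> inR n R0 (upd y m u)).
  { intros u Hu j Hj. unfold upd. destruct (Nat.eqb j m).
    - unfold R0. pose proof (rmaxn_ge0 n (fun j => Rabs (y j))). lra.
    - unfold R0. pose proof (rmaxn_ge n (fun j => Rabs (y j)) j Hj). simpl in H2. pose proof (Rabs_pos t). lra. }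
  apply Hd'. apply Hin. assert (Rabs s <= Rabs t + Rabs (s - t)) by (replace s with (t + (s - t)) at 1 by ring; apply Rabs_triang). lra.
  apply Hin. lra.
  intros j Hj. unfold upd. destruct (Nat.eqb j m). lra. replace (y j - y j) with 0 by ring. rewrite Rabs_R0. lra.
Qed.

Lemma abs_between a b t : Rmin a b <= t <= Rmax a b -> Rabs t <= Rmax (Rabs a) (Rabs b).
Proof.
  intros H. apply Rabs_le. destruct (Rle_dec a b).
  - rewrite Rmin_left, Rmax_right in H by lra.
    pose proof (Rle_abs b). pose proof (Rle_abs (-a)). rewrite Rabs_Ropp in H1.
    pose proof (Rmax_l (Rabs a) (Rabs b)). pose proof (Rmax_r (Rabs a) (Rabs b)). lra.
  - rewrite Rmin_right, Rmax_left in H by lra.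
    pose proof (Rle_abs a). pose proof (Rle_abs (-b)). rewrite Rabs_Ropp in H1.
    pose proof (Rmax_l (Rabs a) (Rabs b)). pose proof (Rmax_r (Rabs a) (Rabs b)). lra.
Qed.

Lemma UCB_iint n B g : UCB n g -> forall m, UCB n (iint B m g).
Proof.
  intros Hg m. induction m; simpl. auto.
  intros R0 HR. set (a := lo (B m)). set (b := hi (B m)).
  set (R1 := Rmax R0 (Rmax (Rabs a) (Rabs b))).
  assert (HR1 : 0 <= R1) by (unfold R1; eapply Rle_trans; [apply HR| apply Rmax_l]).
  destruct (IHm R1 HR1) as [[M HM] HU].
  assert (Hin : forall y t, inR n R0 y -> Rmin a b <= t <= Rmax a b -> inR n R1 (upd y m t)).
  { intros y t Hy Ht j Hj. unfold upd. destruct (Nat.eqb j m).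
    - unfold R1. eapply Rle_trans. 2: apply Rmax_r. apply abs_between; auto.
    - eapply Rle_trans. apply Hy; auto. apply Rmax_l. }
  split.
  - exists (Rabs (b - a) * M). intros y Hy. apply RInt_abs_le. apply (UCB_line n); auto.
    intros t Ht. apply HM. apply Hin; auto.
  - intros eps He. destruct (HU (eps / (Rabs (b - a) + 1)) ltac:(apply Rdiv_lt_0_compat; [lra| pose proof (Rabs_pos (b-a)); lra])) as [d [Hd Hd']].
    exists d. split; auto. intros y z Hy Hz Hc.
    rewrite <- RInt_minusR by (apply (UCB_line n); auto).
    eapply Rle_lt_trans. apply RInt_abs_le with (M := eps / (Rabs (b - a) + 1)).
    intros t. apply cont_minusR; apply (UCB_line n); auto.
    intros t Ht. left. apply Hd'; auto. intros j Hj. unfold upd. destruct (Nat.eqb j m).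
    replace (t - t) with 0 by ring. rewrite Rabs_R0. lra. apply Hc; auto.
    set (w := Rabs (b - a)). assert (0 <= w) by apply Rabs_pos.
    replace (w * (eps / (w + 1))) with (eps - eps / (w + 1)) by (field; lra).
    assert (0 < eps / (w + 1)) by (apply Rdiv_lt_0_compat; lra). lra.
Qed.

Lemma cont_plusR (f g : R -> R) t : continuous f t -> continuous g t -> continuous (fun x => f x + g x) t.
Proof. intros. apply (continuous_plus f g t); auto. Qed.
Lemma cont_constR (c t : R) : continuous (fun _ : R => c) t.
Proof. apply (continuous_const (U := R_UniformSpace) (V := R_UniformSpace) c t). Qed.
Lemma cont_rsum k (F : nat -> R -> R) t : (forall j, (j < k)%nat -> continuous (F j) t) ->
  continuous (fun s => rsum k (fun j => F j s)) t.
Proof. induction k; simpl; intros H. apply cont_constR. apply cont_plusR. apply IHk; intros; apply H; lia. apply H; lia. Qed.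

Lemma RInt_rsum k (F : nat -> R -> R) a b : (forall j, (j < k)%nat -> forall t, continuous (F j) t) ->
  RInt (fun s => rsum k (fun j => F j s)) a b = rsum k (fun j => RInt (F j) a b).
Proof.
  induction k; simpl; intros H. rewrite RInt_constR; ring.
  rewrite RInt_plusR; [rewrite IHk; [reflexivity | intros; apply H; lia] | intros t; apply cont_rsum; intros; apply H; lia | apply H; lia].
Qed.

Lemma iint_ext B m f g x : (forall y, f y = g y) -> iint B m f x = iint B m g x.
Proof. intros H. replace f with g; auto. apply functional_extensionality; intros; auto. Qed.

Lemma iint_plus n B f g : UCB n f -> UCB n g -> forall m x, iint B m (fun y => f y + g y) x = iint B m f x + iint B m g x.
Proof.
  intros Hf Hg m. induction m; intros x; simpl. auto.
  rewrite <- RInt_plusR by (intros; apply (UCB_line n); apply UCB_iint; auto).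
  f_equal. apply functional_extensionality; intros t; auto.
Qed.

Lemma iint_zero B m x : iint B m (fun _ => 0) x = 0.
Proof.
  revert x. induction m; intros x; simpl. auto.
  rewrite (RInt_ext _ (fun _ => 0)). rewrite RInt_constR; ring. intros; apply IHm.
Qed.

Lemma iint_rsum n B k (F : nat -> (nat -> R) -> R) : (forall j, (j < k)%nat -> UCB n (F j)) ->
  forall m x, iint B m (fun y => rsum k (fun j => F j y)) x = rsum k (fun j => iint B m (F j) x).
Proof.
  induction k; intros H m x; simpl. apply iint_zero.
  rewrite (iint_plus n B (fun y => rsum k (fun j => F j y)) (F k)); [rewrite IHk; [reflexivity| intros; apply H; lia] | apply (UCB_rsum n k F); intros; apply H; lia | apply H; lia].
Qed.

Lemma iint_vol B m x : iint B m (fun _ => 1) x = rprod m (fun j => width (B j)).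
Proof.
  revert x. induction m; intros x; simpl. auto.
  rewrite (RInt_ext _ (fun _ => rprod m (fun j => width (B j)))). rewrite RInt_constR. unfold width; ring.
  intros; apply IHm.
Qed.

Lemma rprod_nonneg m (w : nat -> R) : (forall j, (j < m)%nat -> 0 <= w j) -> 0 <= rprod m w.
Proof. induction m; simpl; intros H. lra. apply Rmult_le_pos. apply IHm; intros; apply H; lia. apply H; lia. Qed.

Lemma iint_bounds n B g c c' : UCB n g -> (forall j, (j < n)%nat -> lo (B j) <= hi (B j)) ->
  (forall y, inbox n y B -> c <= g y <= c') ->
  forall m, (m <= n)%nat -> forall x, (forall j, (m <= j < n)%nat -> inI (x j) (B j)) ->
  c * rprod m (fun j => width (B j)) <= iint B m g x <= c' * rprod m (fun j => width (B j)).
Proof.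
  intros Hg HB Hc m. induction m; intros Hm x Hx; simpl.
  - rewrite !Rmult_1_r. apply Hc. intros j Hj. apply Hx; lia.
  - assert (Hab : lo (B m) <= hi (B m)) by (apply HB; lia).
    assert (Hin : forall t, lo (B m) <= t <= hi (B m) -> c * rprod m (fun j => width (B j)) <= iint B m g (upd x m t) <= c' * rprod m (fun j => width (B j))).
    { intros t Ht. apply IHm. lia. intros j Hj. unfold upd. destruct (Nat.eqb_spec j m). subst; unfold inI; auto. apply Hx; lia. }
    split.
    + eapply Rle_trans. 2:{ apply RInt_le_R with (f := fun _ => c * rprod m (fun j => width (B j))); auto.
        intros; apply cont_constR. intros; apply (UCB_line n); apply UCB_iint; auto. intros t Ht; apply Hin; auto. }
      rewrite RInt_constR. unfold width; lra.
    + eapply Rle_trans. apply RInt_le_R with (g := fun _ => c' * rprod m (fun j => width (B j))); auto.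
        intros; apply (UCB_line n); apply UCB_iint; auto. intros; apply cont_constR. intros t Ht; apply Hin; auto.
      rewrite RInt_constR. unfold width; lra.
Qed.

Lemma upd_atI (B : box) c X : upd B c X c = X.
Proof. unfold upd. rewrite Nat.eqb_refl; auto. Qed.
Lemma iint_upd_low B c X g : forall m, (m <= c)%nat -> forall x, iint (upd B c X) m g x = iint B m g x.
Proof.
  induction m; intros Hm x; simpl. auto.
  assert (E : upd B c X m = B m) by (unfold upd; destruct (Nat.eqb_spec m c); [lia|auto]).
  rewrite E. f_equal. apply functional_extensionality; intros t. apply IHm; lia.
Qed.

Lemma chasles_sum (f : R -> R) a h k : (forall t, continuous f t) ->
  rsum k (fun t => RInt f (a + INR t * h) (a + INR (S t) * h)) = RInt f a (a + INR k * h).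
Proof.
  intros Hf. induction k.
  - change (rsum 0 (fun t : nat => RInt f (a + INR t * h) (a + INR (S t) * h))) with 0. simpl INR. replace (a + 0 * h) with a by ring. rewrite RInt_point. reflexivity.
  - change (rsum (S k) (fun t : nat => RInt f (a + INR t * h) (a + INR (S t) * h))) with
      (rsum k (fun t : nat => RInt f (a + INR t * h) (a + INR (S t) * h)) + RInt f (a + INR k * h) (a + INR (S k) * h)).
    rewrite IHk. apply (RInt_Chasles f); apply exR; auto.
Qed.

Lemma piece_lo X m t : lo (piece X m t) = lo X + INR t * (width X / INR m).
Proof. unfold piece; simpl. unfold Rdiv; ring. Qed.
Lemma piece_hi X m t : hi (piece X m t) = lo X + INR (S t) * (width X / INR m).
Proof. unfold piece; simpl. unfold Rdiv; ring. Qed.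

Lemma iint_split n B c mm g : UCB n g -> (0 < mm)%nat ->
  forall m, (c < m)%nat -> forall x,
  rsum mm (fun t => iint (upd B c (piece (B c) mm t)) m g x) = iint B m g x.
Proof.
  intros Hg Hmm m. induction m; intros Hm x; [lia|].
  destruct (Nat.eq_dec m c).
  - subst m. simpl iint.
    transitivity (rsum mm (fun t => RInt (fun s => iint B c g (upd x c s)) (lo (B c) + INR t * (width (B c) / INR mm)) (lo (B c) + INR (S t) * (width (B c) / INR mm)))).
    { apply rsum_ext. intros t _. rewrite upd_atI. rewrite piece_lo, piece_hi. f_equal.
      apply functional_extensionality; intros s. apply iint_upd_low; lia. }
    rewrite chasles_sum. f_equal. unfold width. field. apply not_0_INR. lia.
    intros t. apply (UCB_line n). apply UCB_iint; auto.
  - simpl iint.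
    assert (E : forall t, upd B c (piece (B c) mm t) m = B m) by (intros; unfold upd; destruct (Nat.eqb_spec m c); [lia|auto]).
    transitivity (rsum mm (fun t => RInt (fun s => iint (upd B c (piece (B c) mm t)) m g (upd x m s)) (lo (B m)) (hi (B m)))).
    { apply rsum_ext. intros t _. rewrite E. reflexivity. }
    rewrite <- (RInt_rsum mm (fun t s => iint (upd B c (piece (B c) mm t)) m g (upd x m s))).
    f_equal. apply functional_extensionality; intros s. apply IHm; lia.
    intros j _ t. apply (UCB_line n). apply UCB_iint; auto.
Qed.

Lemma ceil_nat_ge x : x <= INR (ceil_nat x).
Proof.
  unfold ceil_nat. destruct (archimed (- x)) as [H1 H2].
  assert (x <= IZR (1 - up (- x))) by (rewrite minus_IZR; simpl IZR; lra).
  destruct (Z_le_gt_dec 0 (1 - up (- x))).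
  - rewrite INR_IZR_INZ, Z2Nat.id by auto. auto.
  - assert (IZR (1 - up (-x)) < 0) by (apply IZR_lt; lia). pose proof (pos_INR (Z.to_nat (1 - up (- x)))). lra.
Qed.

Lemma ceil_nat_pos x : 0 < x -> (0 < ceil_nat x)%nat.
Proof.
  intros Hx. pose proof (ceil_nat_ge x). destruct (ceil_nat x); [|lia]. simpl in H. lra.
Qed.

Lemma piece_props X m t : proper X -> (t < m)%nat ->
  lo X <= lo (piece X m t) /\ hi (piece X m t) <= hi X /\ width (piece X m t) = width X / INR m.
Proof.
  intros HX Ht. assert (Hm : 0 < INR m) by (apply lt_0_INR; lia).
  assert (Hw : 0 <= width X) by (unfold width, proper in *; lra).
  assert (Htm : INR (S t) <= INR m) by (apply le_INR; lia).
  assert (Ht0 : 0 <= INR t) by apply pos_INR.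
  assert (W : width (piece X m t) = width X / INR m) by (unfold width at 1; rewrite piece_lo, piece_hi, S_INR; field; lra).
  rewrite W, piece_lo, piece_hi.
  split; [|split].
  - assert (0 <= INR t * (width X / INR m)) by (apply Rmult_le_pos; auto; apply Rdiv_le_0_compat; lra). lra.
  - assert (INR (S t) * (width X / INR m) <= INR m * (width X / INR m)) by (apply Rmult_le_compat_r; auto; apply Rdiv_le_0_compat; lra).
    replace (INR m * (width X / INR m)) with (width X) in H by (field; lra). unfold width in *; lra.
  - reflexivity.
Qed.

Lemma split_high K mv c : forall B, In B (split_boxes K mv c) -> forall j, (c <= j)%nat -> B j = K j.
Proof.
  induction c; simpl; intros B HB j Hj.
  - destruct HB as [<-|[]]; auto.
  - apply in_flat_map in HB. destruct HB as [B0 [HB0 HB]]. apply in_map_iff in HB. destruct HB as [t [<- _]].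
    unfold upd. destruct (Nat.eqb_spec j c). lia. apply IHc; auto. lia.
Qed.

Lemma split_low K mv c : (forall j, (j < c)%nat -> proper (K j) /\ (0 < mv j)%nat) ->
  forall B, In B (split_boxes K mv c) -> forall j, (j < c)%nat ->
    lo (K j) <= lo (B j) /\ hi (B j) <= hi (K j) /\ width (B j) = width (K j) / INR (mv j).
Proof.
  induction c; simpl; intros HK B HB j Hj. lia.
  apply in_flat_map in HB. destruct HB as [B0 [HB0 HB]]. apply in_map_iff in HB. destruct HB as [t [<- Ht]].
  apply in_seq in Ht. unfold upd. destruct (Nat.eqb_spec j c).
  - subst. apply piece_props. apply HK; lia. lia.
  - apply (IHc ltac:(intros; apply HK; lia)); auto. lia.
Qed.

Lemma split_integral n K mv g : UCB n g -> forall c, (c <= n)%nat -> (forall j, (j < c)%nat -> (0 < mv j)%nat) ->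
  lsum (map (fun B => box_integral n B g) (split_boxes K mv c)) = box_integral n K g.
Proof.
  intros Hg c. induction c; intros Hc Hmv; simpl.
  - unfold lsum; simpl. ring.
  - rewrite lsum_flat_map. rewrite <- IHc by (auto; lia).
    apply lsum_map_ext. intros B HB. rewrite map_map. rewrite lsum_seq_rsum.
    rewrite <- (split_high K mv c B HB c) by lia.
    unfold box_integral. apply (iint_split n); auto.
Qed.

Lemma box_integral_one n B : box_integral n B (fun _ => 1) = bvol n B.
Proof. unfold box_integral, bvol. apply iint_vol. Qed.

Lemma split_vol n K mv : (forall j, (j < n)%nat -> (0 < mv j)%nat) ->
  lsum (map (bvol n) (split_boxes K mv n)) = bvol n K.
Proof.
  intros H. rewrite <- box_integral_one. rewrite <- (split_integral n K mv (fun _ => 1) (UCB_const n 1) n (le_n n) H).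
  apply lsum_map_ext. intros; rewrite box_integral_one; auto.
Qed.

Lemma rprod_pos m (w : nat -> R) : (forall j, (j < m)%nat -> 0 < w j) -> 0 < rprod m w.
Proof. induction m; simpl; intros H. lra. apply Rmult_lt_0_compat. apply IHm; intros; apply H; lia. apply H; lia. Qed.

Lemma bvol_pos n K : binterior n K -> 0 < bvol n K.
Proof. intros H. apply rprod_pos. intros j Hj. specialize (H j Hj). unfold width; lra. Qed.

Lemma bvol_nonneg n K : bproper n K -> 0 <= bvol n K.
Proof. intros H. apply rprod_nonneg. intros j Hj. specialize (H j Hj). unfold width, proper in *; lra. Qed.

Lemma binterior_proper n K : binterior n K -> bproper n K.
Proof. intros H j Hj. specialize (H j Hj). unfold proper; lra. Qed.

Definition refine_ok (n : nat) (Om : box) (F : box -> Itv) (C g : R) : Prop :=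
  holder_const n Om F C g /\ (forall K, bproper n K -> bsub n K Om -> 0 <= width (F K)).

Lemma refine_props n Om F C g rho K : (0 < n)%nat -> 0 < rho -> refine_ok n Om F C g ->
  binterior n K -> bsub n K Om ->
  (forall B, In B (holder_refine n F C g rho K) -> binterior n B /\ bsub n B K) /\
  (forall h, UCB n h -> lsum (map (fun B => box_integral n B h) (holder_refine n F C g rho K)) = box_integral n K h) /\
  lsum (map (etaK n F) (holder_refine n F C g rho K)) <= rho * etaK n F K.
Proof.
  intros Hn Hrho [[HC [Hg HH]] HFp] HK HKO.
  unfold holder_refine. destruct (Req_EM_T (etaK n F K) 0) as [E0|E0].
  - split; [|split].
    + intros B [<-|[]]. split; auto. apply bsub_refl.
    + intros h _. unfold lsum; simpl. ring.
    + unfold lsum; simpl. rewrite E0. lra.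
  - set (e := etaK n F K) in *. set (vol := bvol n K).
    assert (Hvol : 0 < vol) by (apply bvol_pos; auto).
    assert (HKp : bproper n K) by (apply binterior_proper; auto).
    assert (Hw0 : 0 <= width (F K)) by (apply HFp; auto).
    assert (He : 0 < e). { unfold e, etaK. fold vol. destruct Hw0 as [Hw0|Hw0]. apply Rmult_lt_0_compat; auto.
      exfalso. apply E0. unfold e, etaK. rewrite <- Hw0. ring. }
    assert (Hw : 0 < width (F K)). { unfold e, etaK in He. fold vol in He. destruct Hw0; auto. rewrite <- H in He. lra. }
    assert (HCp : 0 < C). { destruct HC as [HC|HC]; auto. specialize (HH K HKp HKO). rewrite <- HC in HH. lra. }
    set (Y := C * vol / (rho * e)).
    assert (HY : 0 < Y) by (unfold Y; apply Rdiv_lt_0_compat; [apply Rmult_lt_0_compat; auto| apply Rmult_lt_0_compat; auto]).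
    set (r := rpow Y (1 / g)).
    assert (Hr : 0 < r) by (apply rpow_gt0; auto).
    set (mv := fun j => ceil_nat (width (K j) * r)).
    assert (Hwj : forall j, (j < n)%nat -> 0 < width (K j)) by (intros j Hj; specialize (HK j Hj); unfold width; lra).
    assert (Hmv : forall j, (j < n)%nat -> (0 < mv j)%nat) by (intros j Hj; apply ceil_nat_pos; apply Rmult_lt_0_compat; auto).
    assert (HL : forall B, In B (split_boxes K mv n) -> forall j, (j < n)%nat ->
       lo (K j) <= lo (B j) /\ hi (B j) <= hi (K j) /\ width (B j) = width (K j) / INR (mv j)).
    { apply split_low. intros j Hj; split; auto. }
    assert (HBi : forall B, In B (split_boxes K mv n) -> binterior n B /\ bsub n B K).
    { intros B HB. split.
      - intros j Hj. destruct (HL B HB j Hj) as [_ [_ W]].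
        assert (0 < width (B j)). { rewrite W. apply Rdiv_lt_0_compat; auto. apply lt_0_INR. auto. }
        unfold width in *; lra.
      - intros j Hj. destruct (HL B HB j Hj) as [A1 [A2 _]]. split; auto. }
    split; [|split]; auto.
    + intros h Hh. apply split_integral; auto.
    +
      assert (Hbw : forall B, In B (split_boxes K mv n) -> bwidth n B <= / r).
      { intros B HB. apply rmaxn_le. left; apply Rinv_0_lt_compat; auto. intros j Hj.
        destruct (HL B HB j Hj) as [_ [_ W]]. rewrite W.
        pose proof (ceil_nat_ge (width (K j) * r)). fold (mv j) in H.
        assert (Hm : 0 < INR (mv j)) by (apply lt_0_INR; auto).
        apply (Rmult_le_reg_r (INR (mv j))); auto. unfold Rdiv. rewrite Rmult_assoc, Rinv_l by lra.
        rewrite Rmult_1_r. apply (Rmult_le_reg_l r); auto. rewrite <- Rmult_assoc, Rinv_r by lra. lra. }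
      assert (HrY : rpow (/ r) g = / Y).
      { rewrite rpow_inv by auto. unfold r. rewrite rpow_rpow by lra. replace (1 / g * g) with 1 by (field; lra).
        rewrite rpow_1 by lra. reflexivity. }
      assert (HFB : forall B, In B (split_boxes K mv n) -> width (F B) <= rho * e / vol).
      { intros B HB. destruct (HBi B HB) as [Hi Hs].
        eapply Rle_trans. apply HH. apply binterior_proper; auto. eapply bsub_trans; eauto.
        eapply Rle_trans. apply Rmult_le_compat_l. lra. apply rpow_le. lra. apply Hbw; auto.
        rewrite HrY. unfold Y. right. field. repeat split; lra. }
      eapply Rle_trans. apply (lsum_map_le _ (fun B => (rho * e / vol) * bvol n B)).
      { intros B HB. unfold etaK. apply Rmult_le_compat_r. apply bvol_nonneg. apply binterior_proper. apply HBi; auto.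
        apply HFB; auto. }
      rewrite lsum_map_scal. rewrite split_vol; auto. fold vol. right. field. lra.
Qed.

Lemma fold_max_in l x : fold_left Rmax l x = x \/ In (fold_left Rmax l x) l.
Proof.
  revert x. induction l; intros x; simpl. auto.
  destruct (IHl (Rmax x a)) as [H|H].
  - rewrite H. apply (Rmax_case x a (fun r => r = x \/ a = r \/ In r l)); [left; auto | right; left; auto].
  - right; right; auto.
Qed.

Lemma maxlist_in l : l <> [] -> In (maxlist l) l.
Proof. destruct l as [|x l]; intros H. congruence. simpl. destruct (fold_max_in l x) as [E|E]. rewrite E; auto. auto. Qed.

Lemma combine_fst {A B} (l1 : list A) (l2 : list B) : length l1 = length l2 -> map fst (combine l1 l2) = l1.
Proof. revert l2; induction l1; intros [|b l2] H; simpl in *; auto; try lia. f_equal. apply IHl1; lia. Qed.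

Lemma combine_snd {A B} (l1 : list A) (l2 : list B) : length l1 = length l2 -> map snd (combine l1 l2) = l2.
Proof. revert l2; induction l1; intros [|b l2] H; simpl in *; auto; try lia. f_equal. apply IHl1; lia. Qed.

Lemma combine_len {A B} (l1 : list A) (l2 : list B) : length l1 = length l2 -> length (combine l1 l2) = length l1.
Proof. intros. rewrite length_combine. rewrite H. apply Nat.min_id. Qed.

Lemma combine_map_snd {A B} (L : list (A * B)) (g : A * B -> B) :
  combine (map fst L) (map g L) = map (fun ab => (fst ab, g ab)) L.
Proof. induction L; simpl; auto. f_equal; auto. Qed.

Lemma combine_map_fst {A A' B} (h : A -> A') (l1 : list A) (l2 : list B) :
  combine (map h l1) l2 = map (fun ab => (h (fst ab), snd ab)) (combine l1 l2).
Proof. revert l2; induction l1; intros [|b l2]; simpl; auto. f_equal; auto. Qed.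

Lemma filter_map_comm {A B} (h : A -> B) (p : B -> bool) (L : list A) :
  filter p (map h L) = map h (filter (fun a => p (h a)) L).
Proof. induction L; simpl; auto. destruct (p (h a)); simpl; f_equal; auto. Qed.

Lemma filter_len_lt {A} (p q : A -> bool) (L : list A) :
  (forall x, p x = true -> q x = true) -> (exists x, In x L /\ q x = true /\ p x = false) ->
  (length (filter p L) < length (filter q L))%nat.
Proof.
  induction L; intros H [x [Hx [Hq Hp]]]. destruct Hx.
  assert (Hle : forall L', (length (filter p L') <= length (filter q L'))%nat).
  { induction L'; simpl. lia. destruct (p a0) eqn:E. rewrite (H a0 E). simpl. lia. destruct (q a0); simpl; lia. }
  simpl. destruct Hx as [<-|Hx].
  - rewrite Hp, Hq. simpl. specialize (Hle L). lia.
  - destruct (p a) eqn:E. rewrite (H a E). simpl. assert (length (filter p L) < length (filter q L))%nat by (apply IHL; eauto). lia.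
    assert (length (filter p L) < length (filter q L))%nat by (apply IHL; eauto). destruct (q a); simpl; lia.
Qed.

Lemma lsum_filter_split {A} (f : A -> R) (p : A -> bool) (L : list A) :
  lsum (map f L) = lsum (map f (filter p L)) + lsum (map f (filter (fun a => negb (p a)) L)).
Proof. induction L; simpl. unfold lsum; simpl; ring. destruct (p a); simpl; unfold lsum in *; simpl; rewrite IHL; ring. Qed.

Definition cntF (m : list bool) : nat := length (filter negb m).

Lemma dorfler_aux_ok theta es : 0 <= theta <= 1 -> 0 <= lsum es ->
  forall fuel mask, length mask = length es -> (cntF mask < fuel)%nat ->
  length (dorfler_aux theta (lsum es) es fuel mask) = length es /\
  theta * lsum es <= lsum (map fst (filter snd (combine es (dorfler_aux theta (lsum es) es fuel mask)))).
Proof.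
  intros Hth Htot fuel. induction fuel; intros mask Hlen Hcnt. lia.
  simpl. destruct (Rle_dec (theta * lsum es) (lsum (map fst (filter snd (combine es mask))))) as [Hok|Hko].
  - split; auto.
  - set (L := combine es mask).
    assert (HLf : map fst L = es) by (apply combine_fst; auto).
    assert (HLs : map snd L = mask) by (unfold L; apply combine_snd; auto).
    set (U := map fst (filter (fun eb : R * bool => negb (snd eb)) L)).
    set (mx := maxlist U).
    set (gf := fun eb : R * bool => if snd eb then true else if Req_EM_T (fst eb) mx then true else false).
    assert (HU : U <> []).
    { intros HU. apply Hko. unfold U in HU. apply map_eq_nil in HU.
      assert (filter snd L = L).
      { clear -HU. induction L; simpl in *; auto. destruct (snd a); simpl in *; [f_equal; auto| discriminate]. }
      fold L. rewrite H, HLf. nra. }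
    assert (Hmx : In mx U) by (apply maxlist_in; auto).
    apply IHfuel.
    + rewrite length_map. unfold L. rewrite combine_len; auto.
    + assert (cntF (map gf L) < cntF mask)%nat.
      { unfold cntF. rewrite <- HLs. rewrite !filter_map_comm, !length_map.
        apply filter_len_lt.
        - intros [x b]. unfold gf; simpl. destruct b; simpl; auto.
        - unfold U in Hmx. apply in_map_iff in Hmx. destruct Hmx as [[x b] [Hx Hin]]. simpl in Hx.
          apply filter_In in Hin. destruct Hin as [Hin Hb]. simpl in Hb.
          exists (x, b). split; auto. destruct b; simpl in *; try discriminate. split; auto.
          unfold gf; simpl. destruct (Req_dec_T x mx); auto. congruence. }
      fold L. lia.
Qed.

Lemma dorfler_ok theta es : 0 <= theta <= 1 -> 0 <= lsum es ->
  length (dorfler theta es) = length es /\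
  theta * lsum es <= lsum (map fst (filter snd (combine es (dorfler theta es)))).
Proof.
  intros. unfold dorfler. apply dorfler_aux_ok; auto. apply repeat_length.
  unfold cntF. assert (length (filter negb (repeat false (length es))) <= length (repeat false (length es)))%nat by apply filter_length_le.
  rewrite repeat_length in H1. lia.
Qed.

Definition PInv (n : nat) (Om : box) (P : list box) : Prop :=
  (forall K, In K P -> binterior n K /\ bsub n K Om) /\
  (forall h, UCB n h -> lsum (map (fun K => box_integral n K h) P) = box_integral n Om h).

Lemma step_sum (phi : box -> R) n F theta C g rho (P : list box) :
  let mask := dorfler theta (map (etaK n F) P) in
  let PM := combine P mask in
  lsum (map phi (adaquad_step n F theta C g rho P)) =
    lsum (map (fun Kb : box * bool => phi (fst Kb)) (filter (fun Kb : box * bool => negb (snd Kb)) PM))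
  + lsum (map (fun Kb : box * bool => lsum (map phi (holder_refine n F C g rho (fst Kb)))) (filter snd PM)).
Proof.
  intros mask PM. unfold adaquad_step. fold mask PM.
  rewrite map_app, lsum_app, lsum_flat_map, map_map. reflexivity.
Qed.

Lemma P_sum (phi : box -> R) (P : list box) (mask : list bool) : length P = length mask ->
  lsum (map phi P) =
    lsum (map (fun Kb : box * bool => phi (fst Kb)) (filter (fun Kb : box * bool => negb (snd Kb)) (combine P mask)))
  + lsum (map (fun Kb : box * bool => phi (fst Kb)) (filter snd (combine P mask))).
Proof.
  intros H. rewrite <- (combine_fst P mask H) at 1. rewrite map_map.
  rewrite (lsum_filter_split _ snd). ring.
Qed.

Lemma step_ok n Om F theta C g rho P : (0 < n)%nat -> 0 < theta < 1 -> 0 < rho < 1 -> refine_ok n Om F C g ->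
  PInv n Om P ->
  PInv n Om (adaquad_step n F theta C g rho P) /\
  lsum (map (etaK n F) (adaquad_step n F theta C g rho P)) <= (1 - theta * (1 - rho)) * lsum (map (etaK n F) P).
Proof.
  intros Hn Hth Hrho Hok [HP1 HP2].
  assert (Heta : forall K, In K P -> 0 <= etaK n F K).
  { intros K HK. destruct (HP1 K HK). unfold etaK. apply Rmult_le_pos. apply Hok; auto. apply binterior_proper; auto.
    apply bvol_nonneg. apply binterior_proper; auto. }
  set (es := map (etaK n F) P).
  assert (Hes : 0 <= lsum es) by (apply lsum_nonneg; intros x Hx; unfold es in Hx; apply in_map_iff in Hx; destruct Hx as [K [<- HK]]; auto).
  destruct (dorfler_ok theta es ltac:(lra) Hes) as [Hlen Hdor].
  set (mask := dorfler theta es) in *.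
  assert (HlenP : length P = length mask) by (rewrite Hlen; unfold es; rewrite length_map; auto).
  set (PM := combine P mask).
  assert (HinPM : forall Kb, In Kb PM -> In (fst Kb) P).
  { intros [K b] H. simpl. apply in_combine_l in H. auto. }
  assert (HinM : forall Kb, In Kb (filter snd PM) -> In (fst Kb) P) by (intros Kb H; apply filter_In in H; apply HinPM; tauto).
  assert (HinU : forall Kb, In Kb (filter (fun Kb : box * bool => negb (snd Kb)) PM) -> In (fst Kb) P) by (intros Kb H; apply filter_In in H; apply HinPM; tauto).
  split; [split|].
  - intros K' HK'. unfold adaquad_step in HK'. fold es mask PM in HK'. apply in_app_or in HK'. destruct HK' as [H|H].
    + apply in_map_iff in H. destruct H as [Kb [<- H]]. apply HP1. apply HinU; auto.
    + apply in_flat_map in H. destruct H as [Kb [HKb H]]. destruct (HP1 (fst Kb) (HinM Kb HKb)) as [Hi Hs].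
      destruct (refine_props n Om F C g rho (fst Kb) Hn ltac:(lra) Hok Hi Hs) as [R1 _].
      destruct (R1 K' H). split; auto. eapply bsub_trans; eauto.
  - intros h Hh. rewrite step_sum. fold es mask PM. rewrite <- (HP2 h Hh). rewrite (P_sum _ P mask HlenP). fold PM.
    f_equal. apply lsum_map_ext. intros Kb HKb. destruct (HP1 (fst Kb) (HinM Kb HKb)) as [Hi Hs].
    destruct (refine_props n Om F C g rho (fst Kb) Hn ltac:(lra) Hok Hi Hs) as [_ [R2 _]]. apply R2; auto.
  - rewrite step_sum. fold es mask PM.
    set (U := lsum (map (fun Kb : box * bool => etaK n F (fst Kb)) (filter (fun Kb : box * bool => negb (snd Kb)) PM))).
    set (M := lsum (map (fun Kb : box * bool => etaK n F (fst Kb)) (filter snd PM))).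
    assert (HR : lsum (map (fun Kb : box * bool => lsum (map (etaK n F) (holder_refine n F C g rho (fst Kb)))) (filter snd PM)) <= rho * M).
    { unfold M. rewrite <- lsum_map_scal. apply lsum_map_le. intros Kb HKb. destruct (HP1 (fst Kb) (HinM Kb HKb)) as [Hi Hs].
      destruct (refine_props n Om F C g rho (fst Kb) Hn ltac:(lra) Hok Hi Hs) as [_ [_ R3]]. auto. }
    assert (HUM : lsum es = U + M) by (unfold es, U, M; rewrite (P_sum _ P mask HlenP); fold PM; ring).
    rewrite HUM.
    assert (HM : theta * (U + M) <= M).
    { rewrite <- HUM.
      eapply Rle_trans. apply Hdor. right. unfold es. rewrite combine_map_fst. rewrite filter_map_comm. rewrite map_map. simpl. reflexivity. }
    assert (HU0 : 0 <= U). { apply lsum_nonneg. intros x Hx. apply in_map_iff in Hx. destruct Hx as [Kb [<- H]]. apply Heta. apply HinU; auto. }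
    assert (HM0 : 0 <= M). { apply lsum_nonneg. intros x Hx. apply in_map_iff in Hx. destruct Hx as [Kb [<- H]]. apply Heta. apply HinM; auto. }
    nra.
Qed.

Lemma partition_ok n Om F theta C g rho : (0 < n)%nat -> 0 < theta < 1 -> 0 < rho < 1 -> refine_ok n Om F C g ->
  binterior n Om -> forall k,
  PInv n Om (adaquad_partition n Om F theta C g rho k) /\
  lsum (map (etaK n F) (adaquad_partition n Om F theta C g rho (S k))) <=
    (1 - theta * (1 - rho)) * lsum (map (etaK n F) (adaquad_partition n Om F theta C g rho k)).
Proof.
  intros Hn Hth Hrho Hok HOm k.
  assert (H0 : forall k, PInv n Om (adaquad_partition n Om F theta C g rho k)).
  { induction k0; simpl.
    - split. intros K [<-|[]]. split; auto. apply bsub_refl. intros h _. unfold lsum; simpl; ring.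
    - apply (step_ok n Om F theta C g rho); auto. }
  split; auto. simpl. apply (step_ok n Om F theta C g rho); auto.
Qed.

Lemma f_nonneg N s p x : 0 <= f_Phi N s p x.
Proof.
  unfold f_Phi. apply rsum_nonneg. intros i _. pose proof (rpow_ge0 (Rabs (Phi N s i x)) p).
  assert (0 <= rsum (nd N 0) (fun j => rpow (Rabs (pd j (Phi N s i) x)) p)) by (apply rsum_nonneg; intros; apply rpow_ge0).
  assert (0 <= rsum (nd N 0) (fun j => rsum (nd N 0 - j) (fun t => rpow (Rabs (pd (j + t) (pd j (Phi N s i)) x)) p)))
    by (apply rsum_nonneg; intros; apply rsum_nonneg; intros; apply rpow_ge0).
  lra.
Qed.

Lemma quad_bounds n Qr f K a b : quad_rule n Qr -> binterior n K -> (forall y, inbox n y K -> a <= f y <= b) ->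
  a * bvol n K <= quad Qr f K <= b * bvol n K.
Proof.
  intros Hq HK Hf. destruct (Hq K HK) as [Hw Hs]. unfold quad. rewrite <- Hs.
  rewrite <- !lsum_map_scal. split; apply lsum_map_le; intros wx Hin; destruct (Hw wx Hin) as [H1 H2];
  destruct (Hf (snd wx) H2); nra.
Qed.

Lemma box_bounds n f K a b : UCB n f -> binterior n K -> (forall y, inbox n y K -> a <= f y <= b) ->
  a * bvol n K <= box_integral n K f <= b * bvol n K.
Proof.
  intros Hf HK Hb. unfold box_integral, bvol. apply (iint_bounds n); auto.
  intros j Hj. specialize (HK j Hj). lra. intros j Hj; lia.
Qed.

Lemma lsum_diff_le {A} (a b e : A -> R) (P : list A) : (forall K, In K P -> Rabs (a K - b K) <= e K) ->
  Rabs (lsum (map a P) - lsum (map b P)) <= lsum (map e P).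
Proof.
  induction P; simpl; intros H; unfold lsum in *; simpl. rewrite Rminus_0_r, Rabs_R0; lra.
  replace (a a0 + fold_right Rplus 0 (map a P) - (b a0 + fold_right Rplus 0 (map b P)))
    with ((a a0 - b a0) + (fold_right Rplus 0 (map a P) - fold_right Rplus 0 (map b P))) by ring.
  eapply Rle_trans. apply Rabs_triang. pose proof (H a0 (or_introl eq_refl)).
  assert (Rabs (fold_right Rplus 0 (map a P) - fold_right Rplus 0 (map b P)) <= fold_right Rplus 0 (map e P)) by (apply IHP; auto).
  lra.
Qed.

Lemma rpow_diff A B E q : 0 <= A -> 0 <= B -> Rabs (A - B) <= E -> 0 < q <= 1 ->
  Rabs (rpow A q - rpow B q) <= rpow E q.
Proof.
  intros HA HB HE Hq. assert (HE0 : 0 <= E) by (pose proof (Rabs_pos (A - B)); lra).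
  destruct (Rle_dec B A).
  - assert (A <= B + E) by (unfold Rabs in HE; destruct Rcase_abs; lra).
    assert (rpow B q <= rpow A q) by (apply rpow_le; lra).
    assert (rpow A q <= rpow (B + E) q) by (apply rpow_le; lra).
    pose proof (rpow_subadd B E q HB HE0 Hq).
    rewrite Rabs_right by lra. lra.
  - assert (B <= A + E) by (unfold Rabs in HE; destruct Rcase_abs; lra).
    assert (rpow A q <= rpow B q) by (apply rpow_le; lra).
    assert (rpow B q <= rpow (A + E) q) by (apply rpow_le; lra).
    pose proof (rpow_subadd A E q HA HE0 Hq).
    rewrite Rabs_left1 by lra. lra.
Qed.

Lemma sobolev_eq N (s s' s'' : R -> R) p Om (Hd : forall x, is_derive s x (s' x)) (Hd' : forall x, is_derive s' x (s'' x))
  (Hs'' : forall x, continuous s'' x) : 1 <= p ->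
  sobolev_norm N s p Om = rpow (box_integral (nd N 0) Om (f_Phi N s p)) (1 / p).
Proof.
  intros Hp. unfold sobolev_norm. cbv zeta. f_equal. unfold box_integral.
  set (n := nd N 0).
  assert (Hs : forall x, continuous s x) by (apply (deriv_cont s s'); auto).
  assert (Hs' : forall x, continuous s' x) by (apply (deriv_cont s' s''); auto).
  set (T0 := fun i x => rpow (Rabs (Phi N s i x)) p).
  set (T1 := fun i j x => rpow (Rabs (pd j (Phi N s i) x)) p).
  set (T2 := fun i j t x => rpow (Rabs (pd (j + t) (pd j (Phi N s i)) x)) p).
  assert (U0 : forall i, UCB n (T0 i)) by (intros; apply UCB_T0; auto).
  assert (U1 : forall i j, UCB n (T1 i j)) by (intros; apply UCB_T1 with (s' := s'); auto).
  assert (U2 : forall i j t, UCB n (T2 i j t)) by (intros; apply UCB_T2 with (s' := s') (s'' := s''); auto).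
  assert (U1s : forall i, UCB n (fun x => rsum n (fun j => T1 i j x))) by (intros; apply (UCB_rsum n n (T1 i)); auto).
  assert (U2s : forall i j, UCB n (fun x => rsum (n - j) (fun t => T2 i j t x))) by (intros; apply (UCB_rsum n (n - j) (T2 i j)); auto).
  assert (U2ss : forall i, UCB n (fun x => rsum n (fun j => rsum (n - j) (fun t => T2 i j t x)))) by (intros; apply (UCB_rsum n n (fun j x => rsum (n - j) (fun t => T2 i j t x))); auto).
  assert (E : f_Phi N s p = fun x => rsum (nd N (nL N + 1)) (fun i =>
      T0 i x + rsum n (fun j => T1 i j x) + rsum n (fun j => rsum (n - j) (fun t => T2 i j t x)))) by reflexivity.
  rewrite E. rewrite (iint_rsum n Om (nd N (nL N + 1)) (fun i x => T0 i x + rsum n (fun j => T1 i j x) + rsum n (fun j => rsum (n - j) (fun t => T2 i j t x)))).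
  2:{ intros i _. apply UCB_plus; [apply UCB_plus|]; auto. }
  apply rsum_ext. intros i _.
  rewrite (iint_plus n Om (fun x => T0 i x + rsum n (fun j => T1 i j x)) (fun x => rsum n (fun j => rsum (n - j) (fun t => T2 i j t x)))); auto.
  2:{ apply UCB_plus; auto. }
  rewrite (iint_plus n Om (T0 i) (fun x => rsum n (fun j => T1 i j x))); auto.
  rewrite (iint_rsum n Om n (T1 i)); auto.
  rewrite (iint_rsum n Om n (fun j x => rsum (n - j) (fun t => T2 i j t x))); auto.
  f_equal. apply rsum_ext. intros j _. rewrite (iint_rsum n Om (n - j) (T2 i j)); auto.
Qed.

Theorem corollary4p19
  (p theta rho : R) (N : Net) (Om : box)
  (s s' s'' : R -> R) (Sg Sg1 Sg2 : Itv -> Itv)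
  (Qr : box -> list (R * (nat -> R))) :
  1 <= p -> 0 < theta < 1 -> 0 < rho < 1 ->
  (forall l, (l <= nL N + 1)%nat -> (0 < nd N l)%nat) ->
  binterior (nd N 0) Om ->
  (forall x, is_derive s x (s' x)) ->
  (forall x, is_derive s' x (s'' x)) ->
  enclosure_IR s Sg -> enclosure_IR s' Sg1 -> enclosure_IR s'' Sg2 ->
  holder_IR Sg -> holder_IR Sg1 -> holder_IR Sg2 ->
  quad_rule (nd N 0) Qr ->
  cont_Rn (nd N 0) (f_Phi N s p)
  /\ enclosure_box (nd N 0) Om (f_Phi N s p) (F_Phi N Sg Sg1 Sg2 p)
  /\ holder_box (nd N 0) Om (F_Phi N Sg Sg1 Sg2 p)
  /\ forall C g, holder_const (nd N 0) Om (F_Phi N Sg Sg1 Sg2 p) C g ->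
     forall n : nat,
       Rabs (sobolev_norm N s p Om
             - rpow (adaquad_Q (nd N 0) Om (F_Phi N Sg Sg1 Sg2 p) theta C g rho Qr
                               (f_Phi N s p) n) (1 / p))
         <= rpow (adaquad_eta (nd N 0) Om (F_Phi N Sg Sg1 Sg2 p) theta C g rho n) (1 / p)
       /\ adaquad_eta (nd N 0) Om (F_Phi N Sg Sg1 Sg2 p) theta C g rho (S n)
          <= (1 - theta * (1 - rho))
             * adaquad_eta (nd N 0) Om (F_Phi N Sg Sg1 Sg2 p) theta C g rho n.
Proof.
  intros Hp Hth Hrho Hnd HOm Hd Hd' E E1 E2 H H1 H2 Hq.
  assert (Hn : (0 < nd N 0)%nat) by (apply Hnd; lia).
  assert (HOmp : bproper (nd N 0) Om) by (apply binterior_proper; auto).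
  assert (HW : 0 < bwidth (nd N 0) Om).
  { eapply Rlt_le_trans. 2: apply (width_le_bwidth (nd N 0) Om 0 Hn). specialize (HOm 0%nat Hn). unfold width; lra. }
  assert (Hs'' : forall x, continuous s'' x) by (apply (holder_enc_cont s'' Sg2); auto).
  pose proof (Good_F N Om s s' s'' Sg Sg1 Sg2 p Hp HOmp HW E H E1 H1 E2 H2) as G.
  destruct G as [Gp [Gi [CG [gG [HCG [HgG GH]]]]]].
  assert (UF : UCB (nd N 0) (f_Phi N s p)) by (apply UCB_f with (s' := s') (s'' := s''); auto).
  assert (Fin : forall K y, inbox (nd N 0) y K -> inI (f_Phi N s p y) (F_Phi N Sg Sg1 Sg2 p K)).
  { intros K y Hy. apply (F_contains N s s' s''); auto. lra. }
  split; [|split; [|split]].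
  - apply UCB_cont; auto.
  - split; auto.
  - exists CG, gG. split; [lra|split; auto].
  - intros C g Hhc k.
    assert (Hok : refine_ok (nd N 0) Om (F_Phi N Sg Sg1 Sg2 p) C g).
    { split; auto. intros K HK HKO. apply width_nonneg. apply Gp; auto. }
    destruct (partition_ok (nd N 0) Om (F_Phi N Sg Sg1 Sg2 p) theta C g rho Hn Hth Hrho Hok HOm k) as [[PI1 PI2] Heta].
    split; [|exact Heta].
    unfold adaquad_Q, adaquad_eta.
    set (P := adaquad_partition (nd N 0) Om (F_Phi N Sg Sg1 Sg2 p) theta C g rho k).
    rewrite (sobolev_eq N s s' s'' p Om Hd Hd' Hs'' Hp).
    apply rpow_diff.
    + pose proof (box_bounds (nd N 0) (f_Phi N s p) Om 0 (hi (F_Phi N Sg Sg1 Sg2 p Om)) UF HOm) as B.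
      assert (0 * bvol (nd N 0) Om <= box_integral (nd N 0) Om (f_Phi N s p)).
      { apply B. intros y Hy. split. apply f_nonneg. apply (Fin Om y Hy). }
      lra.
    + apply lsum_nonneg. intros x Hx. apply in_map_iff in Hx. destruct Hx as [K [<- HK]].
      destruct (PI1 K HK) as [HKi _].
      assert (0 * bvol (nd N 0) K <= quad Qr (f_Phi N s p) K).
      { apply (quad_bounds (nd N 0) Qr (f_Phi N s p) K 0 (hi (F_Phi N Sg Sg1 Sg2 p K))); auto.
        intros y Hy. split. apply f_nonneg. apply (Fin K y Hy). }
      lra.
    + rewrite <- (PI2 _ UF). apply lsum_diff_le. intros K HK. destruct (PI1 K HK) as [HKi _].
      assert (Hb : forall y, inbox (nd N 0) y K -> lo (F_Phi N Sg Sg1 Sg2 p K) <= f_Phi N s p y <= hi (F_Phi N Sg Sg1 Sg2 p K))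
        by (intros y Hy; apply (Fin K y Hy)).
      pose proof (box_bounds _ _ _ _ _ UF HKi Hb). pose proof (quad_bounds _ Qr _ _ _ _ Hq HKi Hb).
      unfold etaK, width. unfold Rabs. destruct Rcase_abs; lra.
    + split. apply Rdiv_lt_0_compat; lra. unfold Rdiv. rewrite Rmult_1_l.
      rewrite <- Rinv_1. apply Rinv_le_contravar; lra.
Qed.
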